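(* Provably in $\mathsf{GB}^{+\infty}$, and also provably in $\mathsf{GB}^{-\infty}$: the Mostowski cut $\mathsf{C}_{\mathsf{Most}}$ is a cut of $\omega$, i.e. it contains $0$, is closed under successor, and is an initial segment of $\omega$.
   Context: $\mathsf{GB}$ is Gödel–Bernays class theory (two sorts: sets and classes). $\mathsf{GB}^{+\infty}=\mathsf{GB}$. $\mathsf{GB}_{\mathsf{fin}}$ is obtained from $\mathsf{GB}$ by replacing the axiom of infinity by its negation, $\mathsf{TC}$ says every set has a transitive closure, and $\mathsf{GB}^{-\infty}=\mathsf{GB}_{\mathsf{fin}}+\mathsf{TC}$. $\omega$ is the class of finite ordinals (a proper class in $\mathsf{GB}^{-\infty}$). Reasoning in these theories: $V$ is the class of all sets; for each set $a$, $c_a$ is a constant naming $a$ (e.g. the pair $\langle a,0\rangle$); $\mathcal{L}^+_{\mathsf{ZF}}$-sentences are codes of $\varphi(c_{a_1},\dots,c_{a_n})$ with $\varphi$ an (internal) $\mathcal{L}_{\mathsf{ZF}}$-formula. $\mathsf{depth}(\varphi)$ is the length of the longest path in the parsing tree of $\varphi$, and $\mathsf{Depth}_k$ is the set of $\mathcal{L}_{\mathsf{ZF}}$-formulas of depth $\le k$ (so $\mathsf{Depth}_0=\varnothing$ and $\mathsf{Depth}_1$ is the set of atomic formulas). For a collection $F$ of $\mathcal{L}_{\mathsf{ZF}}$-formulas closed under immediate subformulas, with $\mathsf{FSent}$ the $\mathcal{L}^+_{\mathsf{ZF}}$-sentences obtained by substituting constants $c_a$ for the free variables of formulas in $F$,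 a class $T$ is an $F$-truth class over $(V,\in)$ if: (1) $T\subseteq\mathsf{FSent}$; (2) $\ulcorner c_a=c_b\urcorner\in T\leftrightarrow a=b$ and $\ulcorner c_a\in c_b\urcorner\in T\leftrightarrow a\in b$; (3) for $\varphi,\psi\in\mathsf{FSent}$ with $\varphi=\neg\psi$: $\varphi\in T\leftrightarrow\psi\notin T$; (4) for $\varphi=\psi_1\vee\psi_2\in\mathsf{FSent}$: $\varphi\in T\leftrightarrow(\psi_1\in T\vee\psi_2\in T)$; (5) for $\varphi=\exists v\,\psi(v)\in\mathsf{FSent}$: $\varphi\in T\leftrightarrow\exists x\,\psi(c_x)\in T$. The Mostowski cut $\mathsf{C}_{\mathsf{Most}}$ is the class of $k\in\omega$ such that there exists a class $T$ that is a $\mathsf{Depth}_k$-truth class over $(V,\in)$. *)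

(* Defs.v *)
(* Semantic rendering of "provably in GB^{+oo} / GB^{-oo}":
   the claim holds in every two-sorted model (sets, classes) of the theory.
   All internal notions (omega, codes of formulas, substitution, depth, truth
   classes) are defined inside the model, by first-order conditions over its
   sets and classes, so nonstandard models are handled correctly. *)

Section GBModel.

Variables (S C : Type) (ein : S -> S -> Prop) (cin : S -> C -> Prop).

Definition empty (z : S) := forall w, ~ ein w z.
Definition sing (s a : S) := forall w, ein w s <-> w = a.
Definition upair (s a b : S) := forall w, ein w s <-> (w = a \/ w = b).
Definition opair (p a b : S) := forall w, ein w p <-> (sing w a \/ upair w a b).
Definition succ (y y' : S) := forall w, ein w y' <-> (ein w y \/ w = y).
Definition transitive (x : S) := forall y z, ein z y -> ein y x -> ein z x.
Definition ordinal (x : S) := transitive x /\ forall y, ein y x -> transitive y.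
Definition is_nat (n : S) :=
  ordinal n /\ forall m, (ein m n \/ m = n) -> empty m \/ exists m', succ m' m.
(* standard (meta-level) numerals, used only as syntactic tags 0..4 *)
Fixpoint is_num (k : nat) (x : S) : Prop :=
  match k with
  | O => empty x
  | Datatypes.S k' => exists y, is_num k' y /\ succ y x
  end.
Definition tagged (k : nat) (x q : S) := exists t, is_num k t /\ opair x t q.

Definition func (f : S) :=
  (forall p, ein p f -> exists a b, opair p a b) /\
  (forall p p' a b b', opair p a b -> opair p' a b' -> ein p f -> ein p' f -> b = b').
Definition app (f a b : S) := exists p, opair p a b /\ ein p f.
Definition remove (f i g : S) :=
  forall p, ein p g <-> (ein p f /\ exists a b, opair p a b /\ a <> i).

(* constant c_a = <a,0>; variable v_i = <i,1> (i in omega) *)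
Definition const_t (t a : S) := exists z, empty z /\ opair t a z.
Definition var_t (t i : S) := is_nat i /\ exists o, is_num 1 o /\ opair t i o.
Definition term (t : S) := (exists a, const_t t a) \/ (exists i, var_t t i).
(* codes: (t = s) = <0,<t,s>>, (t in s) = <1,<t,s>>, ~phi = <2,phi>,
   phi \/ psi = <3,<phi,psi>>, Exists v_i phi = <4,<i,phi>> *)
Definition f_eq (x t s : S) := exists q, opair q t s /\ tagged 0 x q.
Definition f_in (x t s : S) := exists q, opair q t s /\ tagged 1 x q.
Definition f_neg (x phi : S) := tagged 2 x phi.
Definition f_or (x phi psi : S) := exists q, opair q phi psi /\ tagged 3 x q.
Definition f_ex (x i phi : S) := is_nat i /\ exists q, opair q i phi /\ tagged 4 x q.

Definition atomic_pure (x : S) :=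
  exists t s i j, var_t t i /\ var_t s j /\ (f_eq x t s \/ f_in x t s).

(* x is an (internal) L_ZF formula: x lies in a set closed under immediate
   subformulas all of whose members are atomic or built from members *)
Definition pure (x : S) :=
  exists X, ein x X /\ forall y, ein y X ->
    atomic_pure y \/
    (exists phi, f_neg y phi /\ ein phi X) \/
    (exists phi psi, f_or y phi psi /\ ein phi X /\ ein psi X) \/
    (exists i phi, f_ex y i phi /\ ein phi X).

(* depth(x) <= k, depth = length of longest path in the parsing tree
   (atomic formulas have depth 1) *)
Definition depth_le (x k : S) :=
  exists W,
    let inW := fun y d => exists p, opair p y d /\ ein p W in
    inW x k /\
    forall p, ein p W -> exists y d, opair p y d /\ is_nat d /\
      ((exists t s, term t /\ term s /\ (f_eq y t s \/ f_in y t s) /\ ~ empty d) \/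
       (exists d', succ d' d /\
          ((exists phi, f_neg y phi /\ inW phi d') \/
           (exists phi psi, f_or y phi psi /\ inW phi d' /\ inW psi d') \/
           (exists i phi, f_ex y i phi /\ inW phi d')))).

Definition in_Depth (k x : S) := pure x /\ depth_le x k.

Definition sub_term (f t t' : S) :=
  (exists i a, var_t t i /\ app f i a /\ const_t t' a) \/
  ((~ exists i a, var_t t i /\ app f i a) /\ t' = t).

(* Sub f phi sigma : sigma is the result of replacing in the L^+ formula phi
   every free occurrence of a variable v_i with i in dom f by c_(f i) *)
Definition Sub (f phi sigma : S) :=
  func f /\
  exists W,
    let inW := fun g psi tau =>
      exists p q, opair q psi tau /\ opair p g q /\ ein p W in
    inW f phi sigma /\
    forall p, ein p W -> exists g psi tau q, opair q psi tau /\ opair p g q /\ func g /\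
      ((exists t s t' s', term t /\ term s /\ sub_term g t t' /\ sub_term g s s' /\
          ((f_eq psi t s /\ f_eq tau t' s') \/ (f_in psi t s /\ f_in tau t' s'))) \/
       (exists phi1 tau1, f_neg psi phi1 /\ f_neg tau tau1 /\ inW g phi1 tau1) \/
       (exists phi1 phi2 tau1 tau2, f_or psi phi1 phi2 /\ f_or tau tau1 tau2 /\
          inW g phi1 tau1 /\ inW g phi2 tau2) \/
       (exists i phi1 tau1 h, f_ex psi i phi1 /\ f_ex tau i tau1 /\ remove g i h /\
          inW h phi1 tau1)).

(* closed_in G x : x is an L^+ formula all of whose free variables have
   indices in the set G *)
Definition closed_in (G x : S) :=
  exists W,
    let inW := fun G' y => exists p, opair p G' y /\ ein p W in
    inW G x /\
    forall p, ein p W -> exists G' y, opair p G' y /\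
      ((exists t s, term t /\ term s /\ (f_eq y t s \/ f_in y t s) /\
          (forall i, var_t t i -> ein i G') /\ (forall i, var_t s i -> ein i G')) \/
       (exists phi, f_neg y phi /\ inW G' phi) \/
       (exists phi psi, f_or y phi psi /\ inW G' phi /\ inW G' psi) \/
       (exists i phi G'', f_ex y i phi /\
          (forall w, ein w G'' <-> (ein w G' \/ w = i)) /\ inW G'' phi)).

Definition sentence (x : S) := exists z, empty z /\ closed_in z x.

Definition FSent (k sigma : S) :=
  sentence sigma /\ exists phi f, in_Depth k phi /\ Sub f phi sigma.

Definition Sub1 (i x psi sigma : S) :=
  exists f, (forall p, ein p f <-> opair p i x) /\ Sub f psi sigma.

Definition truth_class (k : S) (T : C) :=
  (forall x, cin x T -> FSent k x) /\
  (forall x t s a b, FSent k x -> const_t t a -> const_t s b -> f_eq x t s ->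
      (cin x T <-> a = b)) /\
  (forall x t s a b, FSent k x -> const_t t a -> const_t s b -> f_in x t s ->
      (cin x T <-> ein a b)) /\
  (forall phi psi, FSent k phi -> FSent k psi -> f_neg phi psi ->
      (cin phi T <-> ~ cin psi T)) /\
  (forall phi psi1 psi2, FSent k phi -> f_or phi psi1 psi2 ->
      (cin phi T <-> (cin psi1 T \/ cin psi2 T))) /\
  (forall phi i psi, FSent k phi -> f_ex phi i psi ->
      (cin phi T <-> exists x sigma, Sub1 i x psi sigma /\ cin sigma T)).

Definition C_Most (k : S) := is_nat k /\ exists T, truth_class k T.

Definition is_cut_Most :=
  (forall z, empty z -> C_Most z) /\
  (forall k k', C_Most k -> succ k k' -> C_Most k') /\
  (forall k j, C_Most k -> is_nat j -> ein j k -> C_Most j).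

(* formulas of the two-sorted language without class quantifiers
   (de Bruijn indices; separate index spaces for set and class variables) *)
Inductive fm : Type :=
  | FIn (i j : nat)
  | FEq (i j : nat)
  | FCIn (i j : nat)
  | FBot
  | FImp (p q : fm)
  | FAll (p : fm).

Definition scons (x : S) (e : nat -> S) (n : nat) : S :=
  match n with O => x | Datatypes.S n' => e n' end.

Fixpoint sat (e : nat -> S) (E : nat -> C) (p : fm) : Prop :=
  match p with
  | FIn i j => ein (e i) (e j)
  | FEq i j => e i = e j
  | FCIn i j => cin (e i) (E j)
  | FBot => False
  | FImp p q => sat e E p -> sat e E q
  | FAll p => forall x, sat (scons x e) E p
  end.

Definition GB_base :=
  inhabited S /\
  (forall a b, (forall x, ein x a <-> ein x b) -> a = b) /\
  (forall X Y : C, (forall x, cin x X <-> cin x Y) -> X = Y) /\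
  (forall a, exists X, forall x, cin x X <-> ein x a) /\
  (forall a b, exists c, upair c a b) /\
  (forall a, exists u, forall x, ein x u <-> exists y, ein y a /\ ein x y) /\
  (forall a, exists q, forall x, ein x q <-> forall z, ein z x -> ein z a) /\
  (forall a, (exists y, ein y a) -> exists y, ein y a /\ forall z, ein z y -> ~ ein z a) /\
  (forall a X, exists b, forall x, ein x b <-> (ein x a /\ cin x X)) /\
  (forall (F : C),
     (forall p p' x y y', opair p x y -> opair p' x y' -> cin p F -> cin p' F -> y = y') ->
     forall a, exists b, forall y, ein y b <-> exists x p, ein x a /\ opair p x y /\ cin p F) /\
  (forall (p : fm) (e : nat -> S) (E : nat -> C),
     exists X, forall x, cin x X <-> sat (scons x e) E p).

Definition Infinity :=
  exists a, (exists z, empty z /\ ein z a) /\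
            forall y, ein y a -> exists y', succ y y' /\ ein y' a.

Definition TC :=
  forall a, exists t, transitive t /\ (forall x, ein x a -> ein x t) /\
    forall t', transitive t' -> (forall x, ein x a -> ein x t') ->
      forall x, ein x t -> ein x t'.

Definition GB_plus_inf := GB_base /\ Infinity.
Definition GB_minus_inf := GB_base /\ ~ Infinity /\ TC.

End GBModel.

(* Main.v *)
Require Import Defs.
From Stdlib Require Import Classical.

Section Basics.
Context {V C : Type} {ein : V -> V -> Prop} {cin : V -> C -> Prop}.
Hypothesis HGB : GB_base V C ein cin.

Local Notation empty := (Defs.empty V ein).
Local Notation sing := (Defs.sing V ein).
Local Notation upair := (Defs.upair V ein).
Local Notation opair := (Defs.opair V ein).
Local Notation succ := (Defs.succ V ein).
Local Notation is_nat := (Defs.is_nat V ein).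
Local Notation is_num := (Defs.is_num V ein).
Local Notation tagged := (Defs.tagged V ein).
Local Notation const_t := (Defs.const_t V ein).
Local Notation var_t := (Defs.var_t V ein).
Local Notation f_eq := (Defs.f_eq V ein).
Local Notation f_in := (Defs.f_in V ein).
Local Notation f_neg := (Defs.f_neg V ein).
Local Notation f_or := (Defs.f_or V ein).
Local Notation f_ex := (Defs.f_ex V ein).

Lemma ax_ext : forall a b, (forall x, ein x a <-> ein x b) -> a = b.
Proof. apply HGB. Qed.

Lemma ax_sep : forall a X, exists b, forall x, ein x b <-> (ein x a /\ cin x X).
Proof. apply HGB. Qed.

Lemma ax_comp : forall (p : fm) (e : nat -> V) (E : nat -> C),
     exists X, forall x, cin x X <-> sat V C ein cin (scons V x e) E p.
Proof. apply HGB. Qed.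

Lemma ax_repl : forall (F : C),
     (forall p p' x y y', opair p x y -> opair p' x y' -> cin p F -> cin p' F -> y = y') ->
     forall a, exists b, forall y, ein y b <-> exists x p, ein x a /\ opair p x y /\ cin p F.
Proof. apply HGB. Qed.

Lemma ax_found : forall a, (exists y, ein y a) -> exists y, ein y a /\ forall z, ein z y -> ~ ein z a.
Proof. apply HGB. Qed.

Lemma ax_pow : forall a, exists q, forall x, ein x q <-> forall z, ein z x -> ein z a.
Proof. apply HGB. Qed.

Lemma ax_union : forall a, exists u, forall x, ein x u <-> exists y, ein y a /\ ein x y.
Proof. apply HGB. Qed.

Lemma ax_pair : forall a b, exists c, upair c a b.
Proof. apply HGB. Qed.

Lemma inhV : inhabited V.
Proof. apply HGB. Qed.

Lemma class_of_set : forall a, exists X, forall x, cin x X <-> ein x a.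
Proof. apply HGB. Qed.

Lemma inhC : inhabited C.
Proof. destruct inhV as [a]. destruct (class_of_set a) as [X _]. exact (inhabits X). Qed.

Lemma empty_ex : exists z, empty z.
Proof.
  destruct inhV as [a]. destruct inhC as [X0].
  destruct (ax_comp FBot (fun _ => a) (fun _ => X0)) as [X HX].
  destruct (ax_sep a X) as [b Hb]. exists b. intros w Hw.
  apply Hb in Hw. destruct Hw as [_ Hw]. apply HX in Hw. exact Hw.
Qed.

Lemma empty_uniq : forall a b, empty a -> empty b -> a = b.
Proof.
  intros a b Ha Hb. apply ax_ext. intro x. split; intro H.
  - exfalso; exact (Ha x H). - exfalso; exact (Hb x H).
Qed.

Lemma sing_ex : forall a, exists s, sing s a.
Proof.
  intro a. destruct (ax_pair a a) as [c Hc]. exists c. intro w. unfold Defs.upair in Hc. rewrite Hc. tauto.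
Qed.

Lemma sing_uniq : forall s s' a, sing s a -> sing s' a -> s = s'.
Proof. intros s s' a H1 H2. unfold Defs.sing in *. apply ax_ext. intro x. rewrite H1, H2. tauto. Qed.

Lemma upair_uniq : forall s s' a b, upair s a b -> upair s' a b -> s = s'.
Proof. intros s s' a b H1 H2. unfold Defs.upair in *. apply ax_ext. intro x. rewrite H1, H2. tauto. Qed.

Lemma opair_ex : forall a b, exists p, opair p a b.
Proof.
  intros a b. destruct (sing_ex a) as [s Hs]. destruct (ax_pair a b) as [u Hu].
  destruct (ax_pair s u) as [p Hp]. exists p. intro w. unfold Defs.upair in Hp. rewrite Hp. split.
  - intros [-> | ->]; auto.
  - intros [H | H]; [left; eapply sing_uniq; eauto | right; eapply upair_uniq; eauto].
Qed.

Lemma opair_uniq : forall p q a b, opair p a b -> opair q a b -> p = q.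
Proof. intros p q a b H1 H2. unfold Defs.opair in *. apply ax_ext. intro x. rewrite H1, H2. tauto. Qed.

Lemma opair_inj : forall p a b c d, opair p a b -> opair p c d -> a = c /\ b = d.
Proof.
  intros p a b c d H1 H2.
  assert (Hac : a = c).
  { destruct (sing_ex a) as [sa Hsa].
    assert (ein sa p) by (apply H1; auto).
    apply H2 in H. destruct H as [H | H].
    - symmetry. apply Hsa. apply H. reflexivity.
    - symmetry. apply Hsa. apply H. auto. }
  subst c. split; [reflexivity|].
  destruct (ax_pair a b) as [u Hu].
  assert (ein u p) by (apply H1; auto).
  apply H2 in H. destruct H as [H | H].
  - assert (Hb : b = a) by (apply H; apply Hu; auto).
    destruct (ax_pair a d) as [ud Hud].
    assert (ein ud p) by (apply H2; auto).
    apply H1 in H0. destruct H0 as [H0 | H0].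
    + assert (d = a) by (apply H0; apply Hud; auto). congruence.
    + assert (d = a \/ d = b) by (apply H0; apply Hud; auto). destruct H3; congruence.
  - assert (d = a \/ d = b) by (apply Hu; apply H; auto).
    destruct H0 as [H0 | H0]; [|auto].
    assert (b = a \/ b = d) by (apply H; apply Hu; auto). destruct H3; congruence.
Qed.

Lemma union2_ex : forall a b, exists u, forall x, ein x u <-> ein x a \/ ein x b.
Proof.
  intros a b. destruct (ax_pair a b) as [c Hc]. destruct (ax_union c) as [u Hu].
  exists u. intro x. rewrite Hu. split.
  - intros [y [Hy Hx]]. apply Hc in Hy. destruct Hy; subst; auto.
  - intros [H | H]; [exists a | exists b]; split; auto; apply Hc; auto.
Qed.

Lemma succ_ex : forall y, exists y', succ y y'.
Proof.
  intro y. destruct (sing_ex y) as [s Hs]. destruct (union2_ex y s) as [u Hu].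
  exists u. intro w. unfold Defs.sing in Hs. rewrite Hu, Hs. tauto.
Qed.

Lemma succ_uniq : forall y x x', succ y x -> succ y x' -> x = x'.
Proof. intros y x x' H1 H2. unfold Defs.succ in *. apply ax_ext. intro w. rewrite H1, H2. tauto. Qed.

Lemma found2 : forall a b, ein a b -> ein b a -> False.
Proof.
  intros a b H1 H2. destruct (ax_pair a b) as [c Hc].
  destruct (ax_found c) as [y [Hy Hmin]]. { exists a. apply Hc. auto. }
  apply Hc in Hy. destruct Hy; subst.
  - apply (Hmin b); auto. apply Hc; auto.
  - apply (Hmin a); auto. apply Hc; auto.
Qed.

Lemma found1 : forall a, ein a a -> False.
Proof. intros a H. exact (found2 a a H H). Qed.

Lemma succ_inj : forall y y' x, succ y x -> succ y' x -> y = y'.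
Proof.
  intros y y' x H1 H2.
  assert (ein y x) by (apply H1; auto). assert (ein y' x) by (apply H2; auto).
  apply H2 in H. apply H1 in H0.
  destruct H as [H | H]; [|auto]. destruct H0 as [H0 | H0]; [|auto].
  exfalso; exact (found2 _ _ H H0).
Qed.

Lemma succ_elem : forall y x, succ y x -> ein y x.
Proof. intros y x H. apply H. auto. Qed.

Lemma num_uniq : forall k x x', is_num k x -> is_num k x' -> x = x'.
Proof.
  induction k; simpl; intros x x' H1 H2.
  - apply empty_uniq; auto.
  - destruct H1 as [y [Hy Hyx]]. destruct H2 as [y' [Hy' Hyx']].
    rewrite (IHk y y' Hy Hy') in Hyx. eapply succ_uniq; eauto.
Qed.

Lemma num_inj : forall k m x, is_num k x -> is_num m x -> k = m.
Proof.
  induction k; destruct m; simpl; intros x H1 H2; auto.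
  - destruct H2 as [y [_ Hy]]. exfalso. exact (H1 y (succ_elem _ _ Hy)).
  - destruct H1 as [y [_ Hy]]. exfalso. exact (H2 y (succ_elem _ _ Hy)).
  - destruct H1 as [y [Hy Hyx]]. destruct H2 as [y' [Hy' Hyx']].
    rewrite (succ_inj _ _ _ Hyx Hyx') in Hy. f_equal. eapply IHk; eauto.
Qed.

Lemma tagged_inj : forall k m x q q', tagged k x q -> tagged m x q' -> k = m /\ q = q'.
Proof.
  intros k m x q q' [t [Ht Hx]] [t' [Ht' Hx']].
  destruct (opair_inj _ _ _ _ _ Hx Hx') as [<- <-]. split; auto. eapply num_inj; eauto.
Qed.

Definition ftag (x : V) (k : nat) := exists q, tagged k x q.

Lemma ftag_uniq : forall x k m, ftag x k -> ftag x m -> k = m.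
Proof. intros x k m [q Hq] [q' Hq']. eapply tagged_inj; eauto. Qed.

Lemma ftag_eq : forall x t s, f_eq x t s -> ftag x 0.
Proof. intros x t s [q [_ H]]. exists q; auto. Qed.
Lemma ftag_in : forall x t s, f_in x t s -> ftag x 1.
Proof. intros x t s [q [_ H]]. exists q; auto. Qed.
Lemma ftag_neg : forall x t, f_neg x t -> ftag x 2.
Proof. intros x t H. exists t; auto. Qed.
Lemma ftag_or : forall x t s, f_or x t s -> ftag x 3.
Proof. intros x t s [q [_ H]]. exists q; auto. Qed.
Lemma ftag_ex : forall x t s, f_ex x t s -> ftag x 4.
Proof. intros x t s [_ [q [_ H]]]. exists q; auto. Qed.

Lemma f_eq_inj : forall x t s t' s', f_eq x t s -> f_eq x t' s' -> t = t' /\ s = s'.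
Proof.
  intros x t s t' s' [q [Hq Hx]] [q' [Hq' Hx']].
  destruct (tagged_inj _ _ _ _ _ Hx Hx') as [_ <-]. eapply opair_inj; eauto.
Qed.
Lemma f_in_inj : forall x t s t' s', f_in x t s -> f_in x t' s' -> t = t' /\ s = s'.
Proof.
  intros x t s t' s' [q [Hq Hx]] [q' [Hq' Hx']].
  destruct (tagged_inj _ _ _ _ _ Hx Hx') as [_ <-]. eapply opair_inj; eauto.
Qed.
Lemma f_or_inj : forall x t s t' s', f_or x t s -> f_or x t' s' -> t = t' /\ s = s'.
Proof.
  intros x t s t' s' [q [Hq Hx]] [q' [Hq' Hx']].
  destruct (tagged_inj _ _ _ _ _ Hx Hx') as [_ <-]. eapply opair_inj; eauto.
Qed.
Lemma f_ex_inj : forall x t s t' s', f_ex x t s -> f_ex x t' s' -> t = t' /\ s = s'.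
Proof.
  intros x t s t' s' [_ [q [Hq Hx]]] [_ [q' [Hq' Hx']]].
  destruct (tagged_inj _ _ _ _ _ Hx Hx') as [_ <-]. eapply opair_inj; eauto.
Qed.
Lemma f_neg_inj : forall x t t', f_neg x t -> f_neg x t' -> t = t'.
Proof. intros x t t' H H'. exact (proj2 (tagged_inj _ _ _ _ _ H H')). Qed.

Lemma const_var : forall t a i, const_t t a -> var_t t i -> False.
Proof.
  intros t a i [z [Hz Ht]] [_ [o [Ho Ht']]].
  destruct (opair_inj _ _ _ _ _ Ht Ht') as [_ <-].
  destruct Ho as [y [_ Hy]]. exact (Hz y (succ_elem _ _ Hy)).
Qed.

Lemma const_inj : forall t a b, const_t t a -> const_t t b -> a = b.
Proof.
  intros t a b [z [_ H]] [z' [_ H']]. exact (proj1 (opair_inj _ _ _ _ _ H H')).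
Qed.

Lemma var_inj : forall t a b, var_t t a -> var_t t b -> a = b.
Proof.
  intros t a b [_ [z [_ H]]] [_ [z' [_ H']]]. exact (proj1 (opair_inj _ _ _ _ _ H H')).
Qed.

Lemma nat_empty : forall z, empty z -> is_nat z.
Proof.
  intros z Hz. split; [split|].
  - intros y w _ Hy. exfalso; exact (Hz y Hy).
  - intros y Hy. exfalso; exact (Hz y Hy).
  - intros m [Hm | ->]; [exfalso; exact (Hz m Hm) | left; auto].
Qed.

Lemma nat_succ : forall n n', is_nat n -> succ n n' -> is_nat n'.
Proof.
  intros n n' [[Htr Hel] Hn] Hs. split; [split|].
  - intros y z Hz Hy. apply Hs in Hy. apply Hs. left.
    destruct Hy as [Hy | ->]; auto. eapply Htr; eauto.
  - intros y Hy. apply Hs in Hy. destruct Hy as [Hy | ->]; auto.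
  - intros m [Hm | ->].
    + apply Hs in Hm. apply Hn. destruct Hm; auto.
    + right. exists n; auto.
Qed.

Lemma nat_elem : forall n m, is_nat n -> ein m n -> is_nat m.
Proof.
  intros n m [[Htr Hel] Hn] Hm. split; [split|].
  - apply Hel; auto.
  - intros y Hy. apply Hel. eapply Htr; eauto.
  - intros m0 Hm0. apply Hn. left. destruct Hm0 as [H | ->]; auto. eapply Htr; eauto.
Qed.

Lemma nat_pred : forall n, is_nat n -> ~ empty n -> exists m, succ m n.
Proof.
  intros n [_ Hn] Hne. destruct (Hn n (or_intror eq_refl)) as [H | H]; [contradiction | auto].
Qed.

Lemma nat_trans : forall n a b, is_nat n -> ein a b -> ein b n -> ein a n.
Proof. intros n a b [[Htr _] _] H1 H2. eapply Htr; eauto. Qed.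

End Basics.

Section Defin.
Context {V C : Type} {ein : V -> V -> Prop} {cin : V -> C -> Prop}.
Hypothesis HGB : GB_base V C ein cin.

Definition Definable (E : nat -> C) (P : (nat -> V) -> Prop) :=
  exists p : fm, forall e, sat V C ein cin e E p <-> P e.

Lemma def_cinT : forall T i, Definable (fun _ => T) (fun e => cin (e i) T).
Proof. intros T i. exists (FCIn i 0). intro e. simpl. tauto. Qed.

Variable E : nat -> C.

Lemma def_ext : forall P Q : (nat -> V) -> Prop, Definable E P -> (forall e, P e <-> Q e) -> Definable E Q.
Proof. intros P Q [p Hp] H. exists p. intro e. rewrite Hp. apply H. Qed.

Lemma def_in : forall i j, Definable E (fun e => ein (e i) (e j)).
Proof. intros i j. exists (FIn i j). intro e. simpl. tauto. Qed.
Lemma def_eq : forall i j, Definable E (fun e => e i = e j).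
Proof. intros i j. exists (FEq i j). intro e. simpl. tauto. Qed.
Lemma def_cin : forall i j, Definable E (fun e => cin (e i) (E j)).
Proof. intros i j. exists (FCIn i j). intro e. simpl. tauto. Qed.
Lemma def_false : Definable E (fun e => False).
Proof. exists FBot. intro e. simpl. tauto. Qed.
Lemma def_true : Definable E (fun e => True).
Proof. exists (FImp FBot FBot). intro e. simpl. tauto. Qed.
Lemma def_imp : forall P Q, Definable E P -> Definable E Q -> Definable E (fun e => P e -> Q e).
Proof. intros P Q [p Hp] [q Hq]. exists (FImp p q). intro e. simpl. rewrite Hp, Hq. tauto. Qed.
Lemma def_not : forall P, Definable E P -> Definable E (fun e => ~ P e).
Proof. intros P [p Hp]. exists (FImp p FBot). intro e. simpl. rewrite Hp. tauto. Qed.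
Lemma def_and : forall P Q, Definable E P -> Definable E Q -> Definable E (fun e => P e /\ Q e).
Proof.
  intros P Q [p Hp] [q Hq]. exists (FImp (FImp p (FImp q FBot)) FBot). intro e. simpl.
  rewrite Hp, Hq. tauto.
Qed.
Lemma def_or : forall P Q, Definable E P -> Definable E Q -> Definable E (fun e => P e \/ Q e).
Proof.
  intros P Q [p Hp] [q Hq]. exists (FImp (FImp p FBot) q). intro e. simpl.
  rewrite Hp, Hq. split; [|tauto]. intro H. destruct (classic (P e)); auto.
Qed.
Lemma def_iff : forall P Q, Definable E P -> Definable E Q -> Definable E (fun e => P e <-> Q e).
Proof.
  intros P Q HP HQ. unfold iff. apply def_and; apply def_imp; auto.
Qed.
Lemma def_all : forall (P : V -> (nat -> V) -> Prop),
  Definable E (fun e => P (e 0) (fun n => e (Datatypes.S n))) -> Definable E (fun e => forall x, P x e).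
Proof.
  intros P [p Hp]. exists (FAll p). intro e. simpl. split.
  - intros H x. specialize (H x). apply Hp in H. exact H.
  - intros H x. apply Hp. exact (H x).
Qed.
Lemma def_ex : forall (P : V -> (nat -> V) -> Prop),
  Definable E (fun e => P (e 0) (fun n => e (Datatypes.S n))) -> Definable E (fun e => exists x, P x e).
Proof.
  intros P HP.
  assert (H : Definable E (fun e => ~ forall x, ~ P x e)).
  { apply def_not. apply def_all. apply def_not. exact HP. }
  eapply def_ext; [exact H|]. intro e. split.
  - intro H1. apply NNPP. intro H2. apply H1. intros x Hx. apply H2. exists x; auto.
  - intros [x Hx] H1. exact (H1 x Hx).
Qed.

Lemma def_class : forall P, Definable E P -> forall e0, exists X, forall x, cin x X <-> P (scons V x e0).
Proof.
  intros P [p Hp] e0. destruct (ax_comp HGB p e0 E) as [X HX]. exists X. intro x.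
  rewrite HX. apply Hp.
Qed.

Lemma def_is_num : forall k i, Definable E (fun e => is_num V ein k (e i)).
Proof.
  induction k; intro i; simpl.
  - unfold Defs.empty. apply def_all. apply def_not. apply def_in.
  - apply def_ex. apply def_and; [apply IHk|].
    unfold Defs.succ. apply def_all. apply def_iff; [apply def_in|].
    apply def_or; [apply def_in | apply def_eq].
Qed.

End Defin.


Ltac def_base :=
  first
  [ apply def_in | apply def_eq | apply def_cinT | apply def_cin | apply def_false | apply def_true
  | apply def_and | apply def_or | apply def_iff | apply def_not
  | apply def_all | apply def_ex | apply def_imp ].
Section Shortcuts.
Context {V C : Type} {ein : V -> V -> Prop} {cin : V -> C -> Prop}.
Variable E : nat -> C.
Lemma def_empty : forall i, @Definable V C ein cin E (fun e => Defs.empty V ein (e i)).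
Proof. intros; unfold Defs.empty; repeat (cbv beta zeta; first [ apply def_is_num | def_base ]). Qed.
Lemma def_sing : forall i j, @Definable V C ein cin E (fun e => Defs.sing V ein (e i) (e j)).
Proof. intros; unfold sing; repeat (cbv beta zeta; first [ apply def_empty | apply def_is_num | def_base ]). Qed.
Lemma def_upair : forall i j k, @Definable V C ein cin E (fun e => Defs.upair V ein (e i) (e j) (e k)).
Proof. intros; unfold upair; repeat (cbv beta zeta; first [ apply def_sing | apply def_empty | apply def_is_num | def_base ]). Qed.
Lemma def_opair : forall i j k, @Definable V C ein cin E (fun e => Defs.opair V ein (e i) (e j) (e k)).
Proof. intros; unfold opair; repeat (cbv beta zeta; first [ apply def_upair | apply def_sing | apply def_empty | apply def_is_num | def_base ]). Qed.
Lemma def_succ : forall i j, @Definable V C ein cin E (fun e => Defs.succ V ein (e i) (e j)).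
Proof. intros; unfold succ; repeat (cbv beta zeta; first [ apply def_opair | apply def_upair | apply def_sing | apply def_empty | apply def_is_num | def_base ]). Qed.
Lemma def_transitive : forall i, @Definable V C ein cin E (fun e => Defs.transitive V ein (e i)).
Proof. intros; unfold transitive; repeat (cbv beta zeta; first [ apply def_succ | apply def_opair | apply def_upair | apply def_sing | apply def_empty | apply def_is_num | def_base ]). Qed.
Lemma def_ordinal : forall i, @Definable V C ein cin E (fun e => Defs.ordinal V ein (e i)).
Proof. intros; unfold ordinal; repeat (cbv beta zeta; first [ apply def_transitive | apply def_succ | apply def_opair | apply def_upair | apply def_sing | apply def_empty | apply def_is_num | def_base ]). Qed.
Lemma def_is_nat : forall i, @Definable V C ein cin E (fun e => Defs.is_nat V ein (e i)).
Proof. intros; unfold is_nat; repeat (cbv beta zeta; first [ apply def_ordinal | apply def_transitive | apply def_succ | apply def_opair | apply def_upair | apply def_sing | apply def_empty | apply def_is_num | def_base ]). Qed.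
Lemma def_tagged : forall (k : nat) i j, @Definable V C ein cin E (fun e => Defs.tagged V ein k (e i) (e j)).
Proof. intros; unfold tagged; repeat (cbv beta zeta; first [ apply def_is_nat | apply def_ordinal | apply def_transitive | apply def_succ | apply def_opair | apply def_upair | apply def_sing | apply def_empty | apply def_is_num | def_base ]). Qed.
Lemma def_func : forall i, @Definable V C ein cin E (fun e => Defs.func V ein (e i)).
Proof. intros; unfold func; repeat (cbv beta zeta; first [ apply def_tagged | apply def_is_nat | apply def_ordinal | apply def_transitive | apply def_succ | apply def_opair | apply def_upair | apply def_sing | apply def_empty | apply def_is_num | def_base ]). Qed.
Lemma def_app : forall i j k, @Definable V C ein cin E (fun e => Defs.app V ein (e i) (e j) (e k)).
Proof. intros; unfold app; repeat (cbv beta zeta; first [ apply def_func | apply def_tagged | apply def_is_nat | apply def_ordinal | apply def_transitive | apply def_succ | apply def_opair | apply def_upair | apply def_sing | apply def_empty | apply def_is_num | def_base ]). Qed.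
Lemma def_remove : forall i j k, @Definable V C ein cin E (fun e => Defs.remove V ein (e i) (e j) (e k)).
Proof. intros; unfold remove; repeat (cbv beta zeta; first [ apply def_app | apply def_func | apply def_tagged | apply def_is_nat | apply def_ordinal | apply def_transitive | apply def_succ | apply def_opair | apply def_upair | apply def_sing | apply def_empty | apply def_is_num | def_base ]). Qed.
Lemma def_const_t : forall i j, @Definable V C ein cin E (fun e => Defs.const_t V ein (e i) (e j)).
Proof. intros; unfold const_t; repeat (cbv beta zeta; first [ apply def_remove | apply def_app | apply def_func | apply def_tagged | apply def_is_nat | apply def_ordinal | apply def_transitive | apply def_succ | apply def_opair | apply def_upair | apply def_sing | apply def_empty | apply def_is_num | def_base ]). Qed.
Lemma def_var_t : forall i j, @Definable V C ein cin E (fun e => Defs.var_t V ein (e i) (e j)).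
Proof. intros; unfold var_t; repeat (cbv beta zeta; first [ apply def_const_t | apply def_remove | apply def_app | apply def_func | apply def_tagged | apply def_is_nat | apply def_ordinal | apply def_transitive | apply def_succ | apply def_opair | apply def_upair | apply def_sing | apply def_empty | apply def_is_num | def_base ]). Qed.
Lemma def_term : forall i, @Definable V C ein cin E (fun e => Defs.term V ein (e i)).
Proof. intros; unfold term; repeat (cbv beta zeta; first [ apply def_var_t | apply def_const_t | apply def_remove | apply def_app | apply def_func | apply def_tagged | apply def_is_nat | apply def_ordinal | apply def_transitive | apply def_succ | apply def_opair | apply def_upair | apply def_sing | apply def_empty | apply def_is_num | def_base ]). Qed.
Lemma def_f_eq : forall i j k, @Definable V C ein cin E (fun e => Defs.f_eq V ein (e i) (e j) (e k)).
Proof. intros; unfold f_eq; repeat (cbv beta zeta; first [ apply def_term | apply def_var_t | apply def_const_t | apply def_remove | apply def_app | apply def_func | apply def_tagged | apply def_is_nat | apply def_ordinal | apply def_transitive | apply def_succ | apply def_opair | apply def_upair | apply def_sing | apply def_empty | apply def_is_num | def_base ]). Qed.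
Lemma def_f_in : forall i j k, @Definable V C ein cin E (fun e => Defs.f_in V ein (e i) (e j) (e k)).
Proof. intros; unfold f_in; repeat (cbv beta zeta; first [ apply def_f_eq | apply def_term | apply def_var_t | apply def_const_t | apply def_remove | apply def_app | apply def_func | apply def_tagged | apply def_is_nat | apply def_ordinal | apply def_transitive | apply def_succ | apply def_opair | apply def_upair | apply def_sing | apply def_empty | apply def_is_num | def_base ]). Qed.
Lemma def_f_neg : forall i j, @Definable V C ein cin E (fun e => Defs.f_neg V ein (e i) (e j)).
Proof. intros; unfold f_neg; repeat (cbv beta zeta; first [ apply def_f_in | apply def_f_eq | apply def_term | apply def_var_t | apply def_const_t | apply def_remove | apply def_app | apply def_func | apply def_tagged | apply def_is_nat | apply def_ordinal | apply def_transitive | apply def_succ | apply def_opair | apply def_upair | apply def_sing | apply def_empty | apply def_is_num | def_base ]). Qed.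
Lemma def_f_or : forall i j k, @Definable V C ein cin E (fun e => Defs.f_or V ein (e i) (e j) (e k)).
Proof. intros; unfold f_or; repeat (cbv beta zeta; first [ apply def_f_neg | apply def_f_in | apply def_f_eq | apply def_term | apply def_var_t | apply def_const_t | apply def_remove | apply def_app | apply def_func | apply def_tagged | apply def_is_nat | apply def_ordinal | apply def_transitive | apply def_succ | apply def_opair | apply def_upair | apply def_sing | apply def_empty | apply def_is_num | def_base ]). Qed.
Lemma def_f_ex : forall i j k, @Definable V C ein cin E (fun e => Defs.f_ex V ein (e i) (e j) (e k)).
Proof. intros; unfold f_ex; repeat (cbv beta zeta; first [ apply def_f_or | apply def_f_neg | apply def_f_in | apply def_f_eq | apply def_term | apply def_var_t | apply def_const_t | apply def_remove | apply def_app | apply def_func | apply def_tagged | apply def_is_nat | apply def_ordinal | apply def_transitive | apply def_succ | apply def_opair | apply def_upair | apply def_sing | apply def_empty | apply def_is_num | def_base ]). Qed.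
Lemma def_atomic_pure : forall i, @Definable V C ein cin E (fun e => Defs.atomic_pure V ein (e i)).
Proof. intros; unfold atomic_pure; repeat (cbv beta zeta; first [ apply def_f_ex | apply def_f_or | apply def_f_neg | apply def_f_in | apply def_f_eq | apply def_term | apply def_var_t | apply def_const_t | apply def_remove | apply def_app | apply def_func | apply def_tagged | apply def_is_nat | apply def_ordinal | apply def_transitive | apply def_succ | apply def_opair | apply def_upair | apply def_sing | apply def_empty | apply def_is_num | def_base ]). Qed.
Lemma def_pure : forall i, @Definable V C ein cin E (fun e => Defs.pure V ein (e i)).
Proof. intros; unfold pure; repeat (cbv beta zeta; first [ apply def_atomic_pure | apply def_f_ex | apply def_f_or | apply def_f_neg | apply def_f_in | apply def_f_eq | apply def_term | apply def_var_t | apply def_const_t | apply def_remove | apply def_app | apply def_func | apply def_tagged | apply def_is_nat | apply def_ordinal | apply def_transitive | apply def_succ | apply def_opair | apply def_upair | apply def_sing | apply def_empty | apply def_is_num | def_base ]). Qed.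
Lemma def_depth_le : forall i j, @Definable V C ein cin E (fun e => Defs.depth_le V ein (e i) (e j)).
Proof. intros; unfold depth_le; repeat (cbv beta zeta; first [ apply def_pure | apply def_atomic_pure | apply def_f_ex | apply def_f_or | apply def_f_neg | apply def_f_in | apply def_f_eq | apply def_term | apply def_var_t | apply def_const_t | apply def_remove | apply def_app | apply def_func | apply def_tagged | apply def_is_nat | apply def_ordinal | apply def_transitive | apply def_succ | apply def_opair | apply def_upair | apply def_sing | apply def_empty | apply def_is_num | def_base ]). Qed.
Lemma def_in_Depth : forall i j, @Definable V C ein cin E (fun e => Defs.in_Depth V ein (e i) (e j)).
Proof. intros; unfold in_Depth; repeat (cbv beta zeta; first [ apply def_depth_le | apply def_pure | apply def_atomic_pure | apply def_f_ex | apply def_f_or | apply def_f_neg | apply def_f_in | apply def_f_eq | apply def_term | apply def_var_t | apply def_const_t | apply def_remove | apply def_app | apply def_func | apply def_tagged | apply def_is_nat | apply def_ordinal | apply def_transitive | apply def_succ | apply def_opair | apply def_upair | apply def_sing | apply def_empty | apply def_is_num | def_base ]). Qed.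
Lemma def_sub_term : forall i j k, @Definable V C ein cin E (fun e => Defs.sub_term V ein (e i) (e j) (e k)).
Proof. intros; unfold sub_term; repeat (cbv beta zeta; first [ apply def_in_Depth | apply def_depth_le | apply def_pure | apply def_atomic_pure | apply def_f_ex | apply def_f_or | apply def_f_neg | apply def_f_in | apply def_f_eq | apply def_term | apply def_var_t | apply def_const_t | apply def_remove | apply def_app | apply def_func | apply def_tagged | apply def_is_nat | apply def_ordinal | apply def_transitive | apply def_succ | apply def_opair | apply def_upair | apply def_sing | apply def_empty | apply def_is_num | def_base ]). Qed.
Lemma def_Sub : forall i j k, @Definable V C ein cin E (fun e => Defs.Sub V ein (e i) (e j) (e k)).
Proof. intros; unfold Sub; repeat (cbv beta zeta; first [ apply def_sub_term | apply def_in_Depth | apply def_depth_le | apply def_pure | apply def_atomic_pure | apply def_f_ex | apply def_f_or | apply def_f_neg | apply def_f_in | apply def_f_eq | apply def_term | apply def_var_t | apply def_const_t | apply def_remove | apply def_app | apply def_func | apply def_tagged | apply def_is_nat | apply def_ordinal | apply def_transitive | apply def_succ | apply def_opair | apply def_upair | apply def_sing | apply def_empty | apply def_is_num | def_base ]). Qed.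
Lemma def_closed_in : forall i j, @Definable V C ein cin E (fun e => Defs.closed_in V ein (e i) (e j)).
Proof. intros; unfold closed_in; repeat (cbv beta zeta; first [ apply def_Sub | apply def_sub_term | apply def_in_Depth | apply def_depth_le | apply def_pure | apply def_atomic_pure | apply def_f_ex | apply def_f_or | apply def_f_neg | apply def_f_in | apply def_f_eq | apply def_term | apply def_var_t | apply def_const_t | apply def_remove | apply def_app | apply def_func | apply def_tagged | apply def_is_nat | apply def_ordinal | apply def_transitive | apply def_succ | apply def_opair | apply def_upair | apply def_sing | apply def_empty | apply def_is_num | def_base ]). Qed.
Lemma def_sentence : forall i, @Definable V C ein cin E (fun e => Defs.sentence V ein (e i)).
Proof. intros; unfold sentence; repeat (cbv beta zeta; first [ apply def_closed_in | apply def_Sub | apply def_sub_term | apply def_in_Depth | apply def_depth_le | apply def_pure | apply def_atomic_pure | apply def_f_ex | apply def_f_or | apply def_f_neg | apply def_f_in | apply def_f_eq | apply def_term | apply def_var_t | apply def_const_t | apply def_remove | apply def_app | apply def_func | apply def_tagged | apply def_is_nat | apply def_ordinal | apply def_transitive | apply def_succ | apply def_opair | apply def_upair | apply def_sing | apply def_empty | apply def_is_num | def_base ]). Qed.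
Lemma def_FSent : forall i j, @Definable V C ein cin E (fun e => Defs.FSent V ein (e i) (e j)).
Proof. intros; unfold FSent; repeat (cbv beta zeta; first [ apply def_sentence | apply def_closed_in | apply def_Sub | apply def_sub_term | apply def_in_Depth | apply def_depth_le | apply def_pure | apply def_atomic_pure | apply def_f_ex | apply def_f_or | apply def_f_neg | apply def_f_in | apply def_f_eq | apply def_term | apply def_var_t | apply def_const_t | apply def_remove | apply def_app | apply def_func | apply def_tagged | apply def_is_nat | apply def_ordinal | apply def_transitive | apply def_succ | apply def_opair | apply def_upair | apply def_sing | apply def_empty | apply def_is_num | def_base ]). Qed.
Lemma def_Sub1 : forall i j k l, @Definable V C ein cin E (fun e => Defs.Sub1 V ein (e i) (e j) (e k) (e l)).
Proof. intros; unfold Sub1; repeat (cbv beta zeta; first [ apply def_FSent | apply def_sentence | apply def_closed_in | apply def_Sub | apply def_sub_term | apply def_in_Depth | apply def_depth_le | apply def_pure | apply def_atomic_pure | apply def_f_ex | apply def_f_or | apply def_f_neg | apply def_f_in | apply def_f_eq | apply def_term | apply def_var_t | apply def_const_t | apply def_remove | apply def_app | apply def_func | apply def_tagged | apply def_is_nat | apply def_ordinal | apply def_transitive | apply def_succ | apply def_opair | apply def_upair | apply def_sing | apply def_empty | apply def_is_num | def_base ]). Qed.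
End Shortcuts.
Ltac def_step := cbv beta zeta; first [ apply def_Sub1 | apply def_FSent | apply def_sentence | apply def_closed_in | apply def_Sub | apply def_sub_term | apply def_in_Depth | apply def_depth_le | apply def_pure | apply def_atomic_pure | apply def_f_ex | apply def_f_or | apply def_f_neg | apply def_f_in | apply def_f_eq | apply def_term | apply def_var_t | apply def_const_t | apply def_remove | apply def_app | apply def_func | apply def_tagged | apply def_is_nat | apply def_ordinal | apply def_transitive | apply def_succ | apply def_opair | apply def_upair | apply def_sing | apply def_empty | apply def_is_num | def_base ].
Ltac solve_def := repeat def_step.



Section Syntax.
Context {V C : Type} {ein : V -> V -> Prop} {cin : V -> C -> Prop}.
Hypothesis HGB : GB_base V C ein cin.

Local Notation empty := (Defs.empty V ein).
Local Notation sing := (Defs.sing V ein).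
Local Notation upair := (Defs.upair V ein).
Local Notation opair := (Defs.opair V ein).
Local Notation succ := (Defs.succ V ein).
Local Notation is_nat := (Defs.is_nat V ein).
Local Notation is_num := (Defs.is_num V ein).
Local Notation tagged := (Defs.tagged V ein).
Local Notation const_t := (Defs.const_t V ein).
Local Notation var_t := (Defs.var_t V ein).
Local Notation term := (Defs.term V ein).
Local Notation f_eq := (Defs.f_eq V ein).
Local Notation f_in := (Defs.f_in V ein).
Local Notation f_neg := (Defs.f_neg V ein).
Local Notation f_or := (Defs.f_or V ein).
Local Notation f_ex := (Defs.f_ex V ein).
Local Notation func := (Defs.func V ein).
Local Notation app := (Defs.app V ein).
Local Notation remove := (Defs.remove V ein).
Local Notation sub_term := (Defs.sub_term V ein).
Local Notation atomic_pure := (Defs.atomic_pure V ein).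
Local Notation pure := (Defs.pure V ein).
Local Notation depth_le := (Defs.depth_le V ein).
Local Notation in_Depth := (Defs.in_Depth V ein).
Local Notation Sub := (Defs.Sub V ein).
Local Notation closed_in := (Defs.closed_in V ein).
Local Notation sentence := (Defs.sentence V ein).
Local Notation FSent := (Defs.FSent V ein).
Local Notation Sub1 := (Defs.Sub1 V ein).

Definition inW3 W g psi tau := exists p q, opair q psi tau /\ opair p g q /\ ein p W.
Definition SubCase W g psi tau :=
      (exists t s t' s', term t /\ term s /\ sub_term g t t' /\ sub_term g s s' /\
          ((f_eq psi t s /\ f_eq tau t' s') \/ (f_in psi t s /\ f_in tau t' s'))) \/
       (exists phi1 tau1, f_neg psi phi1 /\ f_neg tau tau1 /\ inW3 W g phi1 tau1) \/
       (exists phi1 phi2 tau1 tau2, f_or psi phi1 phi2 /\ f_or tau tau1 tau2 /\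
          inW3 W g phi1 tau1 /\ inW3 W g phi2 tau2) \/
       (exists i phi1 tau1 h, f_ex psi i phi1 /\ f_ex tau i tau1 /\ remove g i h /\
          inW3 W h phi1 tau1).
Definition SubW W := forall p, ein p W -> exists g psi tau q, opair q psi tau /\ opair p g q /\ func g /\
   SubCase W g psi tau.

Lemma Sub_iff : forall f phi sigma, Sub f phi sigma <-> func f /\ exists W, inW3 W f phi sigma /\ SubW W.
Proof. intros. split; intro H; exact H. Qed.

Lemma SubW_entry : forall W g psi tau, SubW W -> inW3 W g psi tau -> func g /\ SubCase W g psi tau.
Proof.
  intros W g psi tau HW [p [q [Hq [Hp HpW]]]].
  destruct (HW p HpW) as [g' [psi' [tau' [q' [Hq' [Hp' [Hf Hc]]]]]]].
  destruct (opair_inj HGB _ _ _ _ _ Hp Hp') as [<- <-].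
  destruct (opair_inj HGB _ _ _ _ _ Hq Hq') as [<- <-]. auto.
Qed.

Definition inW2 W y d := exists p, opair p y d /\ ein p W.
Definition DCase W y d := is_nat d /\
      ((exists t s, term t /\ term s /\ (f_eq y t s \/ f_in y t s) /\ ~ empty d) \/
       (exists d', succ d' d /\
          ((exists phi, f_neg y phi /\ inW2 W phi d') \/
           (exists phi psi, f_or y phi psi /\ inW2 W phi d' /\ inW2 W psi d') \/
           (exists i phi, f_ex y i phi /\ inW2 W phi d')))).
Definition DW W := forall p, ein p W -> exists y d, opair p y d /\ DCase W y d.

Lemma depth_iff : forall x k, depth_le x k <-> exists W, inW2 W x k /\ DW W.
Proof. intros. split; intro H; exact H. Qed.

Lemma DW_entry : forall W y d, DW W -> inW2 W y d -> DCase W y d.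
Proof.
  intros W y d HW [p [Hp HpW]].
  destruct (HW p HpW) as [y' [d' [Hp' Hc]]].
  destruct (opair_inj HGB _ _ _ _ _ Hp Hp') as [<- <-]. auto.
Qed.

Definition CCase W G y :=
      ((exists t s, term t /\ term s /\ (f_eq y t s \/ f_in y t s) /\
          (forall i, var_t t i -> ein i G) /\ (forall i, var_t s i -> ein i G)) \/
       (exists phi, f_neg y phi /\ inW2 W G phi) \/
       (exists phi psi, f_or y phi psi /\ inW2 W G phi /\ inW2 W G psi) \/
       (exists i phi G'', f_ex y i phi /\
          (forall w, ein w G'' <-> (ein w G \/ w = i)) /\ inW2 W G'' phi)).
Definition CW W := forall p, ein p W -> exists G y, opair p G y /\ CCase W G y.

Lemma closed_iff : forall G x, closed_in G x <-> exists W, inW2 W G x /\ CW W.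
Proof. intros. split; intro H; exact H. Qed.

Lemma CW_entry : forall W G y, CW W -> inW2 W G y -> CCase W G y.
Proof.
  intros W G y HW [p [Hp HpW]].
  destruct (HW p HpW) as [G' [y' [Hp' Hc]]].
  destruct (opair_inj HGB _ _ _ _ _ Hp Hp') as [<- <-]. auto.
Qed.

Definition PCase X y :=
    atomic_pure y \/
    (exists phi, f_neg y phi /\ ein phi X) \/
    (exists phi psi, f_or y phi psi /\ ein phi X /\ ein psi X) \/
    (exists i phi, f_ex y i phi /\ ein phi X).
Definition PX X := forall y, ein y X -> PCase X y.

Lemma pure_iff : forall x, pure x <-> exists X, ein x X /\ PX X.
Proof. intros. split; intro H; exact H. Qed.

Lemma FSent_iff : forall k x, FSent k x <-> sentence x /\ exists phi f, in_Depth k phi /\ Sub f phi x.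
Proof. intros. split; intro H; exact H. Qed.


Lemma ftag_clash : forall x k m, @ftag V ein x k -> @ftag V ein x m -> k <> m -> False.
Proof. intros x k m H1 H2 H. apply H. exact (ftag_uniq HGB x k m H1 H2). Qed.

End Syntax.

Ltac tag_of H := match type of H with
 | Defs.f_eq _ _ _ _ _ => constr:(ftag_eq _ _ _ H)
 | Defs.f_in _ _ _ _ _ => constr:(ftag_in _ _ _ H)
 | Defs.f_neg _ _ _ _ => constr:(ftag_neg _ _ H)
 | Defs.f_or _ _ _ _ _ => constr:(ftag_or _ _ _ H)
 | Defs.f_ex _ _ _ _ _ => constr:(ftag_ex _ _ _ H)
 end.

Ltac getHG := lazymatch goal with H : GB_base _ _ _ _ |- _ => H end.

Ltac clash := let HG := getHG in exfalso;
  match goal with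
  | H1 : _ |- _ => let t1 := tag_of H1 in
    match goal with H2 : _ |- _ => let t2 := tag_of H2 in
      apply (ftag_clash HG _ _ _ t1 t2); discriminate end end.

Ltac subst2 a b := first [ subst a | subst b | rewrite <- ?a in * ].

Ltac injs := let HG := getHG in repeat match goal with
 | H1 : Defs.f_neg _ _ ?x ?a, H2 : Defs.f_neg _ _ ?x ?b |- _ =>
     tryif constr_eq a b then fail else
     (let E := fresh in pose proof (f_neg_inj HG _ _ _ H1 H2) as E; clear H2; first [subst b | subst a])
 | H1 : Defs.f_eq _ _ ?x ?a ?a', H2 : Defs.f_eq _ _ ?x ?b ?b' |- _ =>
     tryif constr_eq a b then (tryif constr_eq a' b' then fail else
        (let E := fresh in pose proof (f_eq_inj HG _ _ _ _ _ H1 H2) as [_ E]; clear H2; first [subst b' | subst a']))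
     else
     (let E := fresh in let E' := fresh in pose proof (f_eq_inj HG _ _ _ _ _ H1 H2) as [E E']; clear H2;
        first [subst b | subst a]; first [subst b' | subst a'])
 | H1 : Defs.f_in _ _ ?x ?a ?a', H2 : Defs.f_in _ _ ?x ?b ?b' |- _ =>
     tryif constr_eq a b then (tryif constr_eq a' b' then fail else
        (let E := fresh in pose proof (f_in_inj HG _ _ _ _ _ H1 H2) as [_ E]; clear H2; first [subst b' | subst a']))
     else
     (let E := fresh in let E' := fresh in pose proof (f_in_inj HG _ _ _ _ _ H1 H2) as [E E']; clear H2;
        first [subst b | subst a]; first [subst b' | subst a'])
 | H1 : Defs.f_or _ _ ?x ?a ?a', H2 : Defs.f_or _ _ ?x ?b ?b' |- _ =>
     tryif constr_eq a b then (tryif constr_eq a' b' then fail else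
        (let E := fresh in pose proof (f_or_inj HG _ _ _ _ _ H1 H2) as [_ E]; clear H2; first [subst b' | subst a']))
     else
     (let E := fresh in let E' := fresh in pose proof (f_or_inj HG _ _ _ _ _ H1 H2) as [E E']; clear H2;
        first [subst b | subst a]; first [subst b' | subst a'])
 | H1 : Defs.f_ex _ _ ?x ?a ?a', H2 : Defs.f_ex _ _ ?x ?b ?b' |- _ =>
     tryif constr_eq a b then (tryif constr_eq a' b' then fail else
        (let E := fresh in pose proof (f_ex_inj HG _ _ _ _ _ H1 H2) as [_ E]; clear H2; first [subst b' | subst a']))
     else
     (let E := fresh in let E' := fresh in pose proof (f_ex_inj HG _ _ _ _ _ H1 H2) as [E E']; clear H2;
        first [subst b | subst a]; first [subst b' | subst a'])
 end.

Ltac split_hyps := repeat match goal with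
 | H : exists _, _ |- _ => destruct H
 | H : _ /\ _ |- _ => destruct H
 | H : _ \/ _ |- _ => destruct H
 end.

Section Decomp.
Context {V C : Type} {ein : V -> V -> Prop} {cin : V -> C -> Prop}.
Hypothesis HGB : GB_base V C ein cin.

Local Notation empty := (Defs.empty V ein).
Local Notation sing := (Defs.sing V ein).
Local Notation upair := (Defs.upair V ein).
Local Notation opair := (Defs.opair V ein).
Local Notation succ := (Defs.succ V ein).
Local Notation is_nat := (Defs.is_nat V ein).
Local Notation is_num := (Defs.is_num V ein).
Local Notation tagged := (Defs.tagged V ein).
Local Notation const_t := (Defs.const_t V ein).
Local Notation var_t := (Defs.var_t V ein).
Local Notation term := (Defs.term V ein).
Local Notation f_eq := (Defs.f_eq V ein).
Local Notation f_in := (Defs.f_in V ein).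
Local Notation f_neg := (Defs.f_neg V ein).
Local Notation f_or := (Defs.f_or V ein).
Local Notation f_ex := (Defs.f_ex V ein).
Local Notation func := (Defs.func V ein).
Local Notation app := (Defs.app V ein).
Local Notation remove := (Defs.remove V ein).
Local Notation sub_term := (Defs.sub_term V ein).
Local Notation atomic_pure := (Defs.atomic_pure V ein).
Local Notation pure := (Defs.pure V ein).
Local Notation depth_le := (Defs.depth_le V ein).
Local Notation in_Depth := (Defs.in_Depth V ein).
Local Notation Sub := (Defs.Sub V ein).
Local Notation closed_in := (Defs.closed_in V ein).
Local Notation sentence := (Defs.sentence V ein).
Local Notation FSent := (Defs.FSent V ein).
Local Notation Sub1 := (Defs.Sub1 V ein).
Local Notation inW3 := (@inW3 V ein).
Local Notation SubW := (@SubW V ein).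
Local Notation SubCase := (@SubCase V ein).
Local Notation inW2 := (@inW2 V ein).
Local Notation DW := (@DW V ein).
Local Notation DCase := (@DCase V ein).
Local Notation CW := (@CW V ein).
Local Notation CCase := (@CCase V ein).
Local Notation PX := (@PX V ein).
Local Notation PCase := (@PCase V ein).


Lemma FSent_build : forall Ws f phi psi Wd d X z Wc,
  inW3 Ws f phi psi -> inW2 Wd phi d -> inW2 Wc z psi -> ein phi X ->
  SubW Ws -> func f -> DW Wd -> PX X -> empty z -> CW Wc -> FSent d psi.
Proof.
  intros. split.
  - exists z. split; auto. apply closed_iff. exists Wc; auto.
  - exists phi, f. split; [split|].
    + apply pure_iff. eexists; split; eauto.
    + apply depth_iff. exists Wd; eauto.
    + apply Sub_iff. split; auto. exists Ws; auto.
Qed.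

Lemma FSent_neg : forall k phi psi, FSent k phi -> f_neg phi psi ->
  exists k0, succ k0 k /\ FSent k0 psi.
Proof.
  intros k phi psi HF Hn.
  destruct HF as [[z [Hz Hcl]] [phi0 [f [[Hpure Hdep] HSub]]]].
  apply Sub_iff in HSub. destruct HSub as [Hf [Ws [Htop HWs]]].
  destruct (SubW_entry HGB _ _ _ _ HWs Htop) as [_ Hc].
  unfold SubCase in Hc. split_hyps; try clash. injs.
  apply depth_iff in Hdep. destruct Hdep as [Wd [Htopd HWd]].
  pose proof (DW_entry HGB _ _ _ HWd Htopd) as Hd. unfold DCase in Hd. split_hyps; try clash. injs.
  apply pure_iff in Hpure. destruct Hpure as [X [HX HPX]].
  pose proof (HPX _ HX) as Hp. unfold PCase, Defs.atomic_pure in Hp. split_hyps; try clash. injs.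
  apply closed_iff in Hcl. destruct Hcl as [Wc [Htopc HWc]].
  pose proof (CW_entry HGB _ _ _ HWc Htopc) as Hcc. unfold CCase in Hcc. split_hyps; try clash. injs.
  eexists. split; [eassumption|]. eapply FSent_build; eauto.
Qed.

Lemma FSent_or : forall k phi psi1 psi2, FSent k phi -> f_or phi psi1 psi2 ->
  exists k0, succ k0 k /\ FSent k0 psi1 /\ FSent k0 psi2.
Proof.
  intros k phi psi1 psi2 HF Hn.
  destruct HF as [[z [Hz Hcl]] [phi0 [f [[Hpure Hdep] HSub]]]].
  apply Sub_iff in HSub. destruct HSub as [Hf [Ws [Htop HWs]]].
  destruct (SubW_entry HGB _ _ _ _ HWs Htop) as [_ Hc].
  unfold SubCase in Hc. split_hyps; try clash. injs.
  apply depth_iff in Hdep. destruct Hdep as [Wd [Htopd HWd]].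
  pose proof (DW_entry HGB _ _ _ HWd Htopd) as Hd. unfold DCase in Hd. split_hyps; try clash. injs.
  apply pure_iff in Hpure. destruct Hpure as [X [HX HPX]].
  pose proof (HPX _ HX) as Hp. unfold PCase, Defs.atomic_pure in Hp. split_hyps; try clash. injs.
  apply closed_iff in Hcl. destruct Hcl as [Wc [Htopc HWc]].
  pose proof (CW_entry HGB _ _ _ HWc Htopc) as Hcc. unfold CCase in Hcc. split_hyps; try clash. injs.
  eexists. split; [eassumption|]. split; eapply FSent_build; eauto.
Qed.

Lemma FSent_ex : forall k phi i psi, FSent k phi -> f_ex phi i psi ->
  exists k0 psi0 h Ws Wc G, succ k0 k /\ pure psi0 /\ depth_le psi0 k0 /\
    inW3 Ws h psi0 psi /\ SubW Ws /\
    (forall p, ein p h -> exists a b, opair p a b /\ a <> i) /\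
    (forall w, ein w G <-> w = i) /\ inW2 Wc G psi /\ CW Wc.
Proof.
  intros k phi i psi HF Hn.
  destruct HF as [[z [Hz Hcl]] [phi0 [f [[Hpure Hdep] HSub]]]].
  apply Sub_iff in HSub. destruct HSub as [Hf [Ws [Htop HWs]]].
  destruct (SubW_entry HGB _ _ _ _ HWs Htop) as [_ Hc].
  unfold SubCase in Hc. split_hyps; try clash. injs.
  apply depth_iff in Hdep. destruct Hdep as [Wd [Htopd HWd]].
  pose proof (DW_entry HGB _ _ _ HWd Htopd) as Hd. unfold DCase in Hd. split_hyps; try clash. injs.
  apply pure_iff in Hpure. destruct Hpure as [X [HX HPX]].
  pose proof (HPX _ HX) as Hp. unfold PCase, Defs.atomic_pure in Hp. split_hyps; try clash. injs.
  apply closed_iff in Hcl. destruct Hcl as [Wc [Htopc HWc]].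
  pose proof (CW_entry HGB _ _ _ HWc Htopc) as Hcc. unfold CCase in Hcc. split_hyps; try clash. injs.
  match goal with
   | H5 : inW3 Ws ?h ?p0 psi, H7 : succ ?k0 k, H15 : inW2 Wc ?G psi |- _ => exists k0, p0, h, Ws, Wc, G end.
  split; [assumption|]. split; [apply pure_iff; eexists; split; eauto|].
  split; [apply depth_iff; exists Wd; eauto|].
  split; [assumption|]. split; [assumption|].
  split; [intros p Hp; match goal with H : Defs.remove _ _ _ _ _ |- _ => apply H in Hp end; apply Hp|].
  split; [|split; assumption].
  intro w. match goal with H : forall w, ein w _ <-> ein w z \/ w = _ |- _ => rewrite H end.
  split; [intros [Hw|Hw]; auto; exfalso; exact (Hz _ Hw)|auto].
Qed.

Lemma FSent_atomic_eq : forall k phi t s, FSent k phi -> f_eq phi t s ->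
  (exists a, const_t t a) /\ (exists b, const_t s b).
Proof.
  intros k phi t s HF Hn.
  destruct HF as [[z [Hz Hcl]] _].
  apply closed_iff in Hcl. destruct Hcl as [Wc [Htopc HWc]].
  pose proof (CW_entry HGB _ _ _ HWc Htopc) as Hcc. unfold CCase in Hcc. split_hyps; try clash. injs.
  unfold Defs.term in *. split_hyps; split; eauto;
  exfalso; eapply Hz; match goal with H : forall i, var_t _ i -> _ |- _ => apply H; eassumption end.
Qed.

Lemma FSent_atomic_in : forall k phi t s, FSent k phi -> f_in phi t s ->
  (exists a, const_t t a) /\ (exists b, const_t s b).
Proof.
  intros k phi t s HF Hn.
  destruct HF as [[z [Hz Hcl]] _].
  apply closed_iff in Hcl. destruct Hcl as [Wc [Htopc HWc]].
  pose proof (CW_entry HGB _ _ _ HWc Htopc) as Hcc. unfold CCase in Hcc. split_hyps; try clash. injs.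
  unfold Defs.term in *. split_hyps; split; eauto;
  exfalso; eapply Hz; match goal with H : forall i, var_t _ i -> _ |- _ => apply H; eassumption end.
Qed.

Lemma FSent_forms : forall k phi, FSent k phi ->
  (exists t s, f_eq phi t s) \/ (exists t s, f_in phi t s) \/ (exists psi, f_neg phi psi) \/
  (exists psi1 psi2, f_or phi psi1 psi2) \/ (exists i psi, f_ex phi i psi).
Proof.
  intros k phi HF.
  destruct HF as [_ [phi0 [f [_ HSub]]]].
  apply Sub_iff in HSub. destruct HSub as [Hf [Ws [Htop HWs]]].
  destruct (SubW_entry HGB _ _ _ _ HWs Htop) as [_ Hc].
  unfold SubCase in Hc. split_hyps; eauto 10.
Qed.

Lemma FSent_emptyk : forall z phi, empty z -> FSent z phi -> False.
Proof.
  intros z phi Hz HF.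
  destruct HF as [_ [phi0 [f [[_ Hdep] _]]]].
  apply depth_iff in Hdep. destruct Hdep as [Wd [Htopd HWd]].
  pose proof (DW_entry HGB _ _ _ HWd Htopd) as Hd. unfold DCase in Hd. split_hyps; try contradiction;
  eapply Hz; eapply succ_elem; eassumption.
Qed.

End Decomp.

Section Constr.
Context {V C : Type} {ein : V -> V -> Prop} {cin : V -> C -> Prop}.
Hypothesis HGB : GB_base V C ein cin.

Local Notation empty := (Defs.empty V ein).
Local Notation sing := (Defs.sing V ein).
Local Notation upair := (Defs.upair V ein).
Local Notation opair := (Defs.opair V ein).
Local Notation succ := (Defs.succ V ein).
Local Notation is_nat := (Defs.is_nat V ein).
Local Notation is_num := (Defs.is_num V ein).
Local Notation tagged := (Defs.tagged V ein).
Local Notation const_t := (Defs.const_t V ein).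
Local Notation var_t := (Defs.var_t V ein).
Local Notation term := (Defs.term V ein).
Local Notation f_eq := (Defs.f_eq V ein).
Local Notation f_in := (Defs.f_in V ein).
Local Notation f_neg := (Defs.f_neg V ein).
Local Notation f_or := (Defs.f_or V ein).
Local Notation f_ex := (Defs.f_ex V ein).
Local Notation func := (Defs.func V ein).
Local Notation app := (Defs.app V ein).
Local Notation remove := (Defs.remove V ein).
Local Notation sub_term := (Defs.sub_term V ein).
Local Notation atomic_pure := (Defs.atomic_pure V ein).
Local Notation pure := (Defs.pure V ein).
Local Notation depth_le := (Defs.depth_le V ein).
Local Notation in_Depth := (Defs.in_Depth V ein).
Local Notation Sub := (Defs.Sub V ein).
Local Notation closed_in := (Defs.closed_in V ein).
Local Notation sentence := (Defs.sentence V ein).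
Local Notation FSent := (Defs.FSent V ein).
Local Notation Sub1 := (Defs.Sub1 V ein).
Local Notation inW3 := (@inW3 V ein).
Local Notation SubW := (@SubW V ein).
Local Notation SubCase := (@SubCase V ein).
Local Notation inW2 := (@inW2 V ein).
Local Notation DW := (@DW V ein).
Local Notation DCase := (@DCase V ein).
Local Notation CW := (@CW V ein).
Local Notation CCase := (@CCase V ein).
Local Notation PX := (@PX V ein).
Local Notation PCase := (@PCase V ein).


Lemma map_set : forall (R : V -> V -> Prop),
  (forall E i j, @Definable V C ein cin E (fun e => R (e i) (e j))) ->
  (forall x y y', R x y -> R x y' -> y = y') ->
  forall A, exists B, forall y, ein y B <-> exists x, ein x A /\ R x y.
Proof.
  intros R HR Hfun A. destruct (inhC HGB) as [X0].
  assert (HD : @Definable V C ein cin (fun _ => X0) (fun e => exists x y, opair (e 0) x y /\ R x y)).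
  { apply def_ex. cbv beta. apply def_ex. cbv beta. apply def_and; [apply def_opair | apply HR]. }
  destruct (def_class HGB _ _ HD (fun _ => A)) as [F HF].
  destruct (ax_repl HGB F) with (a := A) as [B HB].
  { intros p p' x y y' Hp Hp' HpF Hp'F.
    apply HF in HpF. apply HF in Hp'F. simpl in HpF, Hp'F.
    destruct HpF as [x1 [y1 [H1 H2]]]. destruct Hp'F as [x2 [y2 [H3 H4]]].
    destruct (opair_inj HGB _ _ _ _ _ Hp H1) as [<- <-].
    destruct (opair_inj HGB _ _ _ _ _ Hp' H3) as [<- <-]. eauto. }
  exists B. intro y. rewrite HB. split.
  - intros [x [p [Hx [Hp HpF]]]]. apply HF in HpF. simpl in HpF.
    destruct HpF as [x1 [y1 [H1 H2]]].
    destruct (opair_inj HGB _ _ _ _ _ Hp H1) as [<- <-]. eauto.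
  - intros [x [Hx HR']]. destruct (opair_ex HGB x y) as [p Hp]. exists x, p.
    split; auto. split; auto. apply HF. simpl. eauto.
Qed.

Lemma product_set : forall A B, exists P, forall w, ein w P <-> exists x y, ein x A /\ ein y B /\ opair w x y.
Proof.
  intros A B. destruct (inhC HGB) as [X0].
  destruct (union2_ex HGB A B) as [U HU].
  destruct (ax_pow HGB U) as [P1 HP1]. destruct (ax_pow HGB P1) as [P2 HP2].
  assert (HD : @Definable V C ein cin (fun _ => X0)
     (fun e => exists x y, ein x (e 1) /\ ein y (e 2) /\ opair (e 0) x y)) by solve_def.
  destruct (def_class HGB _ _ HD (fun n => match n with 0 => A | _ => B end)) as [X HX].
  destruct (ax_sep HGB P2 X) as [P HP]. exists P. intro w. rewrite HP, HX. simpl. split.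
  - intros [_ H]. exact H.
  - intros [x [y [Hx [Hy Hw]]]]. split; [|eauto].
    apply HP2. intros s Hs. apply HP1. intros a Ha. apply HU.
    apply Hw in Hs. destruct Hs as [Hs | Hs].
    + apply Hs in Ha. subst; auto.
    + apply Hs in Ha. destruct Ha; subst; auto.
Qed.

Lemma join_set : forall (R : V -> V -> V -> Prop),
  (forall E i j k, @Definable V C ein cin E (fun e => R (e i) (e j) (e k))) ->
  (forall x y z z', R x y z -> R x y z' -> z = z') ->
  forall A B, exists W, forall z, ein z W <-> exists x y, ein x A /\ ein y B /\ R x y z.
Proof.
  intros R HR Hfun A B.
  destruct (product_set A B) as [P HP].
  destruct (map_set (fun w z => exists x y, opair w x y /\ R x y z)) with (A := P) as [W HW].
  - intros E i j. apply def_ex. cbv beta. apply def_ex. cbv beta. apply def_and; [apply def_opair | apply HR].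
  - intros w z z' [x [y [H1 H2]]] [x' [y' [H3 H4]]].
    destruct (opair_inj HGB _ _ _ _ _ H1 H3) as [<- <-]. eauto.
  - exists W. intro z. rewrite HW. split.
    + intros [w [Hw [x [y [H1 H2]]]]]. apply HP in Hw. destruct Hw as [x' [y' [Hx [Hy H3]]]].
      destruct (opair_inj HGB _ _ _ _ _ H1 H3) as [<- <-]. eauto.
    + intros [x [y [Hx [Hy Hz]]]]. destruct (opair_ex HGB x y) as [w Hw]. exists w.
      split; [apply HP; eauto | eauto].
Qed.

Lemma nat_ind_int : forall P : V -> Prop,
  (forall E, @Definable V C ein cin E (fun e => P (e 0))) ->
  (forall z, empty z -> P z) ->
  (forall n n', is_nat n -> P n -> succ n n' -> P n') ->
  forall n, is_nat n -> P n.
Proof.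
  intros P HD H0 HS n Hn. apply NNPP. intro HnP.
  destruct (inhC HGB) as [X0].
  destruct (succ_ex HGB n) as [n' Hn'].
  assert (HDn : @Definable V C ein cin (fun _ => X0) (fun e => ~ P (e 0))) by (apply def_not; apply HD).
  destruct (def_class HGB _ _ HDn (fun _ => n)) as [X HX].
  destruct (ax_sep HGB n' X) as [A HA].
  destruct (ax_found HGB A) as [m [HmA Hmin]].
  { exists n. apply HA. split; [apply succ_elem; auto | apply HX; simpl; auto]. }
  apply HA in HmA. destruct HmA as [Hmn' HmX]. apply HX in HmX. simpl in HmX.
  assert (Hnat' : is_nat n') by (eapply nat_succ; eauto).
  assert (Hm : is_nat m) by (eapply nat_elem; eauto).
  destruct (classic (empty m)) as [Hme | Hme]; [exact (HmX (H0 m Hme))|].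
  destruct (nat_pred m Hm Hme) as [m0 Hm0].
  assert (Hm0m : ein m0 m) by (apply succ_elem; auto).
  assert (Hm0n : ein m0 n') by (eapply nat_trans; eauto).
  assert (Hm0nat : is_nat m0) by (eapply nat_elem; eauto).
  destruct (classic (P m0)) as [HP0 | HP0].
  - exact (HmX (HS m0 m Hm0nat HP0 Hm0)).
  - apply (Hmin m0 Hm0m). apply HA. split; auto. apply HX. simpl. auto.
Qed.


Lemma depth_succ : forall x d d', depth_le x d -> succ d d' -> depth_le x d'.
Proof.
  intros x d d' Hd Hs. apply depth_iff in Hd. destruct Hd as [Wd [Htop HWd]].
  destruct (map_set (fun p p' => exists y a a1, opair p y a /\ succ a a1 /\ opair p' y a1)) with (A := Wd) as [W HW].
  - intros E i j. solve_def.
  - intros p p1 p2 [y [a [a1 [H1 [H2 H3]]]]] [y' [a' [a1' [H1' [H2' H3']]]]].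
    destruct (opair_inj HGB _ _ _ _ _ H1 H1') as [<- <-].
    rewrite (succ_uniq HGB _ _ _ H2 H2') in H3. eapply opair_uniq; eauto.
  - assert (Hlift : forall y a a1, inW2 Wd y a -> succ a a1 -> inW2 W y a1).
    { intros y a a1 [p [Hp HpW]] Ha. destruct (opair_ex HGB y a1) as [p' Hp'].
      exists p'. split; auto. apply HW. exists p. split; auto. exists y, a, a1. auto. }
    apply depth_iff. exists W. split; [eapply Hlift; eauto|].
    intros p' Hp'. apply HW in Hp'. destruct Hp' as [p [HpW [y [a [a1 [Hp [Ha Hp']]]]]]].
    destruct (HWd p HpW) as [y0 [a0 [Hp0 Hc]]].
    destruct (opair_inj HGB _ _ _ _ _ Hp Hp0) as [<- <-].
    exists y, a1. split; auto.
    destruct Hc as [Hnat [Hat | [d0 [Hd0 Hcs]]]].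
    + split; [eapply nat_succ; eauto|]. left.
      destruct Hat as [t [s [Ht [Hs' [Hts Hne]]]]]. exists t, s. split; auto. split; auto. split; auto.
      intro He. exact (He a (succ_elem _ _ Ha)).
    + split; [eapply nat_succ; eauto|]. right. exists a. split; auto.
      destruct Hcs as [[phi [Hn Hw]] | [[phi [psi [Ho [Hw1 Hw2]]]] | [i [phi [He Hw]]]]].
      * left. exists phi. split; auto. eapply Hlift; eauto.
      * right; left. exists phi, psi. split; auto. split; eapply Hlift; eauto.
      * right; right. exists i, phi. split; auto. eapply Hlift; eauto.
Qed.

Lemma depth_mono : forall n, is_nat n -> forall j x, (ein j n \/ j = n) -> depth_le x j -> depth_le x n.
Proof.
  apply (nat_ind_int (fun n => forall j x, (ein j n \/ j = n) -> depth_le x j -> depth_le x n)).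
  - intros E. solve_def.
  - intros z Hz j x [Hj | ->] Hd; [exfalso; exact (Hz j Hj) | exact Hd].
  - intros n n' Hn IH Hs j x [Hj | ->] Hd; [|exact Hd].
    apply Hs in Hj. eapply depth_succ; [|exact Hs]. apply (IH j); auto.
Qed.

Lemma FSent_mono : forall j k x, FSent j x -> is_nat k -> ein j k -> FSent k x.
Proof.
  intros j k x [Hs [phi [f [[Hp Hd] HS]]]] Hk Hj. split; auto. exists phi, f. split; auto. split; auto.
  exact (depth_mono k Hk j phi (or_introl Hj) Hd).
Qed.

End Constr.

Section Compose.
Context {V C : Type} {ein : V -> V -> Prop} {cin : V -> C -> Prop}.
Hypothesis HGB : GB_base V C ein cin.

Local Notation empty := (Defs.empty V ein).
Local Notation sing := (Defs.sing V ein).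
Local Notation upair := (Defs.upair V ein).
Local Notation opair := (Defs.opair V ein).
Local Notation succ := (Defs.succ V ein).
Local Notation is_nat := (Defs.is_nat V ein).
Local Notation is_num := (Defs.is_num V ein).
Local Notation tagged := (Defs.tagged V ein).
Local Notation const_t := (Defs.const_t V ein).
Local Notation var_t := (Defs.var_t V ein).
Local Notation term := (Defs.term V ein).
Local Notation f_eq := (Defs.f_eq V ein).
Local Notation f_in := (Defs.f_in V ein).
Local Notation f_neg := (Defs.f_neg V ein).
Local Notation f_or := (Defs.f_or V ein).
Local Notation f_ex := (Defs.f_ex V ein).
Local Notation func := (Defs.func V ein).
Local Notation app := (Defs.app V ein).
Local Notation remove := (Defs.remove V ein).
Local Notation sub_term := (Defs.sub_term V ein).
Local Notation atomic_pure := (Defs.atomic_pure V ein).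
Local Notation pure := (Defs.pure V ein).
Local Notation depth_le := (Defs.depth_le V ein).
Local Notation in_Depth := (Defs.in_Depth V ein).
Local Notation Sub := (Defs.Sub V ein).
Local Notation closed_in := (Defs.closed_in V ein).
Local Notation sentence := (Defs.sentence V ein).
Local Notation FSent := (Defs.FSent V ein).
Local Notation Sub1 := (Defs.Sub1 V ein).
Local Notation inW3 := (@inW3 V ein).
Local Notation SubW := (@SubW V ein).
Local Notation SubCase := (@SubCase V ein).
Local Notation inW2 := (@inW2 V ein).
Local Notation DW := (@DW V ein).
Local Notation DCase := (@DCase V ein).
Local Notation CW := (@CW V ein).
Local Notation CCase := (@CCase V ein).
Local Notation PX := (@PX V ein).
Local Notation PCase := (@PCase V ein).


Definition disj ga gb := forall p p' x y y', opair p x y -> opair p' x y' -> ein p ga -> ein p' gb -> False.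
Definition union2 g ga gb := forall p, ein p g <-> ein p ga \/ ein p gb.
Definition diffdom G2 G g := forall w, ein w G2 <-> ein w G /\ ~ (exists p y, opair p w y /\ ein p g).

Lemma func_union : forall g ga gb, func ga -> func gb -> disj ga gb -> union2 g ga gb -> func g.
Proof.
  intros g ga gb [Ha1 Ha2] [Hb1 Hb2] Hd Hu. split.
  - intros p Hp. apply Hu in Hp. destruct Hp; auto.
  - intros p p' a b b' Hp Hp' H1 H2. apply Hu in H1. apply Hu in H2.
    destruct H1 as [H1|H1]; destruct H2 as [H2|H2].
    + eapply Ha2; eauto.
    + exfalso; exact (Hd p p' a b b' Hp Hp' H1 H2).
    + exfalso; exact (Hd p' p a b' b Hp' Hp H2 H1).
    + eapply Hb2; eauto.
Qed.

Lemma sub_term_comp : forall g ga gb t t' t'', sub_term ga t t' -> sub_term gb t' t'' -> union2 g ga gb ->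
  sub_term g t t''.
Proof.
  intros g ga gb t t' t'' H1 H2 Hu.
  destruct H1 as [[i [a [Hv [[p [Hp Hpg]] Hc]]]] | [Hn ->]].
  - destruct H2 as [[i' [a' [Hv' _]]] | [_ ->]].
    + exfalso; exact (const_var HGB _ _ _ Hc Hv').
    + left. exists i, a. split; auto. split; auto. exists p. split; auto. apply Hu; auto.
  - destruct H2 as [[i' [a' [Hv' [[p [Hp Hpg]] Hc]]]] | [Hn' ->]].
    + left. exists i', a'. split; auto. split; auto. exists p. split; auto. apply Hu; auto.
    + right. split; auto. intros [i [a [Hv [p [Hp Hpg]]]]]. apply Hu in Hpg.
      destruct Hpg as [Hpg|Hpg]; [apply Hn | apply Hn']; exists i, a; split; auto; exists p; auto.
Qed.

Lemma sub_compose : forall Wa Wb, SubW Wa -> SubW Wb -> exists W, SubW W /\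
  forall ga gb g c0 c1 c2, inW3 Wa ga c0 c1 -> inW3 Wb gb c1 c2 -> disj ga gb -> union2 g ga gb ->
    inW3 W g c0 c2.
Proof.
  intros Wa Wb HWa HWb.
  destruct (join_set HGB (fun pa pb e => exists ga c0 c1 qa gb c2 qb g q,
     opair qa c0 c1 /\ opair pa ga qa /\ opair qb c1 c2 /\ opair pb gb qb /\ disj ga gb /\
     union2 g ga gb /\ opair q c0 c2 /\ opair e g q)) with (A := Wa) (B := Wb) as [W HW].
  - intros E i j k. unfold disj, union2. solve_def.
  - intros pa pb e e' (ga & c0 & c1 & qa & gb & c2 & qb & g & q & H1 & H2 & H3 & H4 & H5 & H6 & H7 & H8)
       (ga' & c0' & c1' & qa' & gb' & c2' & qb' & g' & q' & H1' & H2' & H3' & H4' & H5' & H6' & H7' & H8').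
    destruct (opair_inj HGB _ _ _ _ _ H2 H2') as [? ?]; subst.
    destruct (opair_inj HGB _ _ _ _ _ H4 H4') as [? ?]; subst.
    destruct (opair_inj HGB _ _ _ _ _ H1 H1') as [? ?]; subst.
    destruct (opair_inj HGB _ _ _ _ _ H3 H3') as [? ?]; subst.
    assert (g = g') by (apply (ax_ext HGB); intro x; split; intro Hx; [apply H6'; apply H6 | apply H6; apply H6']; exact Hx). subst g'.
    rewrite (opair_uniq HGB _ _ _ _ H7 H7') in H8. eapply opair_uniq; eauto.
  - assert (Key : forall ga gb g c0 c1 c2, inW3 Wa ga c0 c1 -> inW3 Wb gb c1 c2 -> disj ga gb ->
        union2 g ga gb -> inW3 W g c0 c2).
    { intros ga gb g c0 c1 c2 [pa [qa [Hqa [Hpa Hpain]]]] [pb [qb [Hqb [Hpb Hpbin]]]] Hd Hu.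
      destruct (opair_ex HGB c0 c2) as [q Hq]. destruct (opair_ex HGB g q) as [e He].
      exists e, q. split; auto. split; auto. apply HW. exists pa, pb. split; auto. split; auto.
      exists ga, c0, c1, qa, gb, c2, qb, g, q. tauto. }
    exists W. split; [|exact Key].
    intros e He. apply HW in He.
    destruct He as (pa & pb & Hpa & Hpb & ga & c0 & c1 & qa & gb & c2 & qb & g & q & H1 & H2 & H3 & H4 & Hd & Hu & Hq & He).
    assert (Ia : inW3 Wa ga c0 c1) by (exists pa, qa; auto).
    assert (Ib : inW3 Wb gb c1 c2) by (exists pb, qb; auto).
    destruct (SubW_entry HGB _ _ _ _ HWa Ia) as [Hfa Hca].
    destruct (SubW_entry HGB _ _ _ _ HWb Ib) as [Hfb Hcb].
    exists g, c0, c2, q. split; auto. split; auto. split; [exact (func_union g ga gb Hfa Hfb Hd Hu)|].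
    unfold SubCase in Hca, Hcb.
    destruct Hca as [A|[A|[A|A]]]; destruct Hcb as [B|[B|[B|B]]]; split_hyps; try clash; injs.
    + left. match goal with H : f_eq c0 ?t ?s, H' : f_eq c2 ?t' ?s' |- _ => exists t, s, t', s' end.
      split; [assumption|]. split; [assumption|].
      split; [eapply sub_term_comp; eauto|]. split; [eapply sub_term_comp; eauto|]. left; eauto.
    + left. match goal with H : f_in c0 ?t ?s, H' : f_in c2 ?t' ?s' |- _ => exists t, s, t', s' end.
      split; [assumption|]. split; [assumption|].
      split; [eapply sub_term_comp; eauto|]. split; [eapply sub_term_comp; eauto|]. right; eauto.
    + right; left. do 2 eexists. split; [eassumption|]. split; [eassumption|]. eapply Key; eauto.
    + right; right; left. do 4 eexists. split; [eassumption|]. split; [eassumption|].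
      split; eapply Key; eauto.
    + right; right; right.
      match goal with
      | H0 : f_ex c0 ?i ?phi, H5 : f_ex c2 ?i ?tau,
        Ha : Defs.remove _ _ ga ?i ?ha, Hb : Defs.remove _ _ gb ?i ?hb |- _ =>
        destruct (union2_ex HGB ha hb) as [h Hh];
        exists i, phi, tau, h; split; [exact H0|]; split; [exact H5|]; split;
        [ intro p; unfold union2 in Hu; unfold Defs.remove in Ha, Hb; rewrite Hh, Hu, Ha, Hb; tauto
        | eapply (Key ha hb h phi); [ match goal with H : inW3 Wa ha phi _ |- _ => exact H end
          | match goal with H : inW3 Wb hb _ tau |- _ => exact H end | | exact Hh] ]
      end.
      * intros p p' x y y' Hp Hp' Hpa' Hpb'.
        match goal with Ha : Defs.remove _ _ ga _ _, Hb : Defs.remove _ _ gb _ _ |- _ =>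
          apply Ha in Hpa'; apply Hb in Hpb' end.
        exact (Hd p p' x y y' Hp Hp' (proj1 Hpa') (proj1 Hpb')).
Qed.


Lemma sub_term_closed : forall g t t' G G2, sub_term g t t' -> term t -> (forall i, var_t t i -> ein i G) ->
  diffdom G2 G g -> term t' /\ (forall i, var_t t' i -> ein i G2).
Proof.
  intros g t t' G G2 Hs Ht HG Hd.
  destruct Hs as [[i [a [Hv [Happ Hc]]]] | [Hn ->]].
  - split; [left; eauto|]. intros j Hj. exfalso. exact (const_var HGB _ _ _ Hc Hj).
  - split; auto. intros j Hj. apply Hd. split; auto.
    intros [p [y [Hp Hpg]]]. apply Hn. exists j, y. split; auto. exists p; auto.
Qed.

Lemma diffdom_ext : forall G2 G g i h G'' G3, diffdom G2 G g -> remove g i h ->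
  (forall w, ein w G'' <-> ein w G \/ w = i) -> (forall w, ein w G3 <-> ein w G2 \/ w = i) ->
  diffdom G3 G'' h.
Proof.
  intros G2 G g i h G'' G3 Hd Hr HG'' HG3 w.
  rewrite HG3, HG''. unfold diffdom in Hd. rewrite Hd. unfold Defs.remove in Hr.
  destruct (classic (w = i)) as [Hwi | Hwi].
  - subst w. split; [intros _; split; [right; auto|] | intros _; right; auto].
    intros [p [y [Hp Hph]]]. apply Hr in Hph. destruct Hph as [_ [a [b [Hab Hne]]]].
    destruct (opair_inj HGB _ _ _ _ _ Hp Hab) as [? _]. auto.
  - split.
    + intros [[HwG Hnd] | Hw]; [|contradiction]. split; [left; auto|].
      intros [p [y [Hp Hph]]]. apply Hr in Hph. apply Hnd. exists p, y. tauto.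
    + intros [[HwG | Hw] Hnd]; [|contradiction]. left. split; auto.
      intros [p [y [Hp Hpg]]]. apply Hnd. exists p, y. split; auto. apply Hr. split; auto.
      exists w, y. auto.
Qed.

Lemma closed_compose : forall Wc Wb, CW Wc -> SubW Wb -> exists W, CW W /\
  forall G c1 g c2 G2, inW2 Wc G c1 -> inW3 Wb g c1 c2 -> diffdom G2 G g -> inW2 W G2 c2.
Proof.
  intros Wc Wb HWc HWb.
  destruct (join_set HGB (fun pc pb e => exists G c1 g c2 qb G2,
     opair pc G c1 /\ opair qb c1 c2 /\ opair pb g qb /\ diffdom G2 G g /\ opair e G2 c2))
     with (A := Wc) (B := Wb) as [W HW].
  - intros E i j k. unfold diffdom. solve_def.
  - intros pc pb e e' (G & c1 & g & c2 & qb & G2 & H1 & H2 & H3 & H4 & H5)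
       (G' & c1' & g' & c2' & qb' & G2' & H1' & H2' & H3' & H4' & H5').
    destruct (opair_inj HGB _ _ _ _ _ H1 H1') as [? ?]; subst.
    destruct (opair_inj HGB _ _ _ _ _ H3 H3') as [? ?]; subst.
    destruct (opair_inj HGB _ _ _ _ _ H2 H2') as [? ?]; subst.
    assert (G2 = G2') by (apply (ax_ext HGB); intro x; split; intro Hx; [apply H4'; apply H4 | apply H4; apply H4']; exact Hx).
    subst. eapply opair_uniq; eauto.
  - assert (Key : forall G c1 g c2 G2, inW2 Wc G c1 -> inW3 Wb g c1 c2 -> diffdom G2 G g -> inW2 W G2 c2).
    { intros G c1 g c2 G2 [pc [Hpc Hpcin]] [pb [qb [Hqb [Hpb Hpbin]]]] Hd.
      destruct (opair_ex HGB G2 c2) as [e He].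
      exists e. split; auto. apply HW. exists pc, pb. split; auto. split; auto.
      exists G, c1, g, c2, qb, G2. tauto. }
    exists W. split; [|exact Key].
    intros e He. apply HW in He.
    destruct He as (pc & pb & Hpc & Hpb & G & c1 & g & c2 & qb & G2 & H1 & H2 & H3 & Hd & He).
    assert (Ic : inW2 Wc G c1) by (exists pc; auto).
    assert (Ib : inW3 Wb g c1 c2) by (exists pb, qb; auto).
    pose proof (CW_entry HGB _ _ _ HWc Ic) as Hcc.
    destruct (SubW_entry HGB _ _ _ _ HWb Ib) as [Hfb Hcb].
    exists G2, c2. split; auto.
    unfold CCase in Hcc. unfold SubCase in Hcb.
    destruct Hcc as [A|[A|[A|A]]]; destruct Hcb as [B|[B|[B|B]]]; split_hyps; try clash; injs.
    + left. match goal with H' : f_eq c2 ?t' ?s' |- _ => exists t', s' end.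
      match goal with
      | Ht : sub_term g ?t ?t', Hs : sub_term g ?s ?s', Ht0 : term ?t, Hs0 : term ?s,
        Hvt : forall i, var_t ?t i -> ein i G, Hvs : forall i, var_t ?s i -> ein i G,
        Heq : f_eq c1 ?t ?s |- _ =>
        destruct (sub_term_closed _ _ _ _ _ Ht Ht0 Hvt Hd);
        destruct (sub_term_closed _ _ _ _ _ Hs Hs0 Hvs Hd)
      end. tauto.
    + left. match goal with H' : f_in c2 ?t' ?s' |- _ => exists t', s' end.
      match goal with
      | Ht : sub_term g ?t ?t', Hs : sub_term g ?s ?s', Ht0 : term ?t, Hs0 : term ?s,
        Hvt : forall i, var_t ?t i -> ein i G, Hvs : forall i, var_t ?s i -> ein i G,
        Heq : f_in c1 ?t ?s |- _ =>
        destruct (sub_term_closed _ _ _ _ _ Ht Ht0 Hvt Hd);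
        destruct (sub_term_closed _ _ _ _ _ Hs Hs0 Hvs Hd)
      end. tauto.
    + right; left. match goal with H' : f_neg c2 ?t |- _ => exists t end.
      split; [assumption|]. eapply Key; [eassumption| |exact Hd].
      match goal with H : inW3 Wb g _ _ |- _ => exact H end.
    + right; right; left. match goal with H' : f_or c2 ?t ?s |- _ => exists t, s end.
      split; [assumption|].
      match goal with H : inW2 Wc G ?a, H' : inW2 Wc G ?b, Ha : inW3 Wb g ?a ?ta, Hb : inW3 Wb g ?b ?tb,
        Hor : f_or c1 ?a ?b |- _ =>
        split; [exact (Key _ _ _ _ _ H Ha Hd) | exact (Key _ _ _ _ _ H' Hb Hd)] end.
    + right; right; right.
      match goal with
      | H5 : f_ex c2 ?i ?tau, Hr : Defs.remove _ _ g ?i ?h, HG'' : forall w, ein w ?G'' <-> ein w G \/ w = ?i,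
        Hc : inW2 Wc ?G'' ?phi, Hs : inW3 Wb ?h ?phi ?tau |- _ =>
        destruct (sing_ex HGB i) as [si Hsi];
        destruct (union2_ex HGB G2 si) as [G3 HG3];
        assert (HG3' : forall w, ein w G3 <-> ein w G2 \/ w = i)
          by (intro w; rewrite HG3; unfold Defs.sing in Hsi; rewrite Hsi; tauto);
        exists i, tau, G3; split; [exact H5|]; split; [exact HG3'|];
        apply (Key G'' phi h tau G3 Hc Hs); eapply diffdom_ext; [exact Hd|exact Hr|exact HG''|exact HG3']
      end.
Qed.

Lemma FSent_Sub1 : forall k phi i psi a sigma, FSent k phi -> f_ex phi i psi -> Sub1 i a psi sigma ->
  exists k0, succ k0 k /\ FSent k0 sigma.
Proof.
  intros k phi i psi a sigma HF Hex [f1 [Hf1 HS1]].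
  destruct (FSent_ex HGB _ _ _ _ HF Hex) as
    (k0 & psi0 & h & Ws & Wc & G & Hk0 & Hpure & Hdep & HIs & HWs & Hh & HG & HIc & HWc).
  apply Sub_iff in HS1. destruct HS1 as [Hfunc1 [Wb [HIb HWb]]].
  exists k0. split; auto.
  destruct (sub_compose _ _ HWs HWb) as [W [HW HWk]].
  destruct (closed_compose _ _ HWc HWb) as [W' [HW' HWk']].
  destruct (union2_ex HGB h f1) as [g Hg].
  destruct (empty_ex HGB) as [z Hz].
  assert (Hd : disj h f1).
  { intros p p' x y y' Hp Hp' Hph Hpf. apply Hh in Hph. destruct Hph as [a' [b' [Hab Hne]]].
    apply Hf1 in Hpf. destruct (opair_inj HGB _ _ _ _ _ Hp Hab) as [? _].
    destruct (opair_inj HGB _ _ _ _ _ Hp' Hpf) as [? _]. subst. auto. }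
  destruct (SubW_entry HGB _ _ _ _ HWs HIs) as [Hfh _].
  split.
  - exists z. split; auto. apply closed_iff. exists W'. split; auto.
    apply (HWk' G psi f1 sigma z HIc HIb).
    intro w. split; [intro Hw; exfalso; exact (Hz w Hw)|].
    intros [HwG Hn]. apply HG in HwG. subst w. exfalso. apply Hn.
    destruct (opair_ex HGB i a) as [p Hp]. exists p, a. split; auto. apply Hf1; auto.
  - exists psi0, g. split; [split; auto|].
    apply Sub_iff. split; [exact (func_union g h f1 Hfh Hfunc1 Hd Hg)|].
    exists W. split; auto. exact (HWk h f1 g psi0 psi sigma HIs HIb Hd Hg).
Qed.

End Compose.

Section Main.
Context {V C : Type} {ein : V -> V -> Prop} {cin : V -> C -> Prop}.
Hypothesis HGB : GB_base V C ein cin.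

Local Notation empty := (Defs.empty V ein).
Local Notation sing := (Defs.sing V ein).
Local Notation upair := (Defs.upair V ein).
Local Notation opair := (Defs.opair V ein).
Local Notation succ := (Defs.succ V ein).
Local Notation is_nat := (Defs.is_nat V ein).
Local Notation is_num := (Defs.is_num V ein).
Local Notation tagged := (Defs.tagged V ein).
Local Notation const_t := (Defs.const_t V ein).
Local Notation var_t := (Defs.var_t V ein).
Local Notation term := (Defs.term V ein).
Local Notation f_eq := (Defs.f_eq V ein).
Local Notation f_in := (Defs.f_in V ein).
Local Notation f_neg := (Defs.f_neg V ein).
Local Notation f_or := (Defs.f_or V ein).
Local Notation f_ex := (Defs.f_ex V ein).
Local Notation func := (Defs.func V ein).
Local Notation app := (Defs.app V ein).
Local Notation remove := (Defs.remove V ein).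
Local Notation sub_term := (Defs.sub_term V ein).
Local Notation atomic_pure := (Defs.atomic_pure V ein).
Local Notation pure := (Defs.pure V ein).
Local Notation depth_le := (Defs.depth_le V ein).
Local Notation in_Depth := (Defs.in_Depth V ein).
Local Notation Sub := (Defs.Sub V ein).
Local Notation closed_in := (Defs.closed_in V ein).
Local Notation sentence := (Defs.sentence V ein).
Local Notation FSent := (Defs.FSent V ein).
Local Notation Sub1 := (Defs.Sub1 V ein).
Local Notation inW3 := (@inW3 V ein).
Local Notation SubW := (@SubW V ein).
Local Notation SubCase := (@SubCase V ein).
Local Notation inW2 := (@inW2 V ein).
Local Notation DW := (@DW V ein).
Local Notation DCase := (@DCase V ein).
Local Notation CW := (@CW V ein).
Local Notation CCase := (@CCase V ein).
Local Notation PX := (@PX V ein).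
Local Notation PCase := (@PCase V ein).

Local Notation truth_class := (Defs.truth_class V C ein cin).
Local Notation C_Most := (Defs.C_Most V C ein cin).

Definition Clause (inT : V -> Prop) x :=
  (exists t s a b, f_eq x t s /\ const_t t a /\ const_t s b /\ a = b) \/
  (exists t s a b, f_in x t s /\ const_t t a /\ const_t s b /\ ein a b) \/
  (exists psi, f_neg x psi /\ ~ inT psi) \/
  (exists psi1 psi2, f_or x psi1 psi2 /\ (inT psi1 \/ inT psi2)) \/
  (exists i psi, f_ex x i psi /\ exists a sigma, Sub1 i a psi sigma /\ inT sigma).

Lemma clause_eq : forall inT x t s a b, f_eq x t s -> const_t t a -> const_t s b ->
  (Clause inT x <-> a = b).
Proof.
  intros inT x t s a b Hx Ha Hb. split.
  - intros [A|[A|[A|[A|A]]]].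
    + destruct A as (t' & s' & a' & b' & H1 & H2 & H3 & H4). injs.
      rewrite (const_inj HGB _ _ _ Ha H2), (const_inj HGB _ _ _ Hb H3). exact H4.
    + destruct A as (t' & s' & a' & b' & H1 & _). clash.
    + destruct A as (p & H1 & _). clash.
    + destruct A as (p & q & H1 & _). clash.
    + destruct A as (p & q & H1 & _). clash.
  - intro H. left. exists t, s, a, b. auto.
Qed.

Lemma clause_in : forall inT x t s a b, f_in x t s -> const_t t a -> const_t s b ->
  (Clause inT x <-> ein a b).
Proof.
  intros inT x t s a b Hx Ha Hb. split.
  - intros [A|[A|[A|[A|A]]]].
    + destruct A as (t' & s' & a' & b' & H1 & _). clash.
    + destruct A as (t' & s' & a' & b' & H1 & H2 & H3 & H4). injs.
      rewrite (const_inj HGB _ _ _ Ha H2), (const_inj HGB _ _ _ Hb H3). exact H4.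
    + destruct A as (p & H1 & _). clash.
    + destruct A as (p & q & H1 & _). clash.
    + destruct A as (p & q & H1 & _). clash.
  - intro H. right; left. exists t, s, a, b. auto.
Qed.

Lemma clause_neg : forall inT x psi, f_neg x psi -> (Clause inT x <-> ~ inT psi).
Proof.
  intros inT x psi Hx. split.
  - intros [A|[A|[A|[A|A]]]].
    + destruct A as (t' & s' & a' & b' & H1 & _). clash.
    + destruct A as (t' & s' & a' & b' & H1 & _). clash.
    + destruct A as (p & H1 & H2). injs. exact H2.
    + destruct A as (p & q & H1 & _). clash.
    + destruct A as (p & q & H1 & _). clash.
  - intro H. right; right; left. exists psi. auto.
Qed.

Lemma clause_or : forall inT x psi1 psi2, f_or x psi1 psi2 -> (Clause inT x <-> inT psi1 \/ inT psi2).
Proof.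
  intros inT x psi1 psi2 Hx. split.
  - intros [A|[A|[A|[A|A]]]].
    + destruct A as (t' & s' & a' & b' & H1 & _). clash.
    + destruct A as (t' & s' & a' & b' & H1 & _). clash.
    + destruct A as (p & H1 & _). clash.
    + destruct A as (p & q & H1 & H2). injs. exact H2.
    + destruct A as (p & q & H1 & _). clash.
  - intro H. right; right; right; left. exists psi1, psi2. auto.
Qed.

Lemma clause_ex : forall inT x i psi, f_ex x i psi ->
  (Clause inT x <-> exists a sigma, Sub1 i a psi sigma /\ inT sigma).
Proof.
  intros inT x i psi Hx. split.
  - intros [A|[A|[A|[A|A]]]].
    + destruct A as (t' & s' & a' & b' & H1 & _). clash.
    + destruct A as (t' & s' & a' & b' & H1 & _). clash.
    + destruct A as (p & H1 & _). clash.
    + destruct A as (p & q & H1 & _). clash.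
    + destruct A as (p & q & H1 & H2). injs. exact H2.
  - intro H. right; right; right; right. exists i, psi. auto.
Qed.

Lemma clause_T : forall k T x, is_nat k -> truth_class k T -> FSent k x ->
  (cin x T <-> Clause (fun y => cin y T) x).
Proof.
  intros k T x Hk HT Hx. destruct HT as (T1 & T2 & T3 & T4 & T5 & T6).
  destruct (FSent_forms HGB _ _ Hx) as [(t & s & H)|[(t & s & H)|[(psi & H)|[(p1 & p2 & H)|(i & psi & H)]]]].
  - destruct (FSent_atomic_eq HGB _ _ _ _ Hx H) as [[a Ha] [b Hb]].
    rewrite (clause_eq _ _ _ _ _ _ H Ha Hb). eapply T2; eauto.
  - destruct (FSent_atomic_in HGB _ _ _ _ Hx H) as [[a Ha] [b Hb]].
    rewrite (clause_in _ _ _ _ _ _ H Ha Hb). eapply T3; eauto.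
  - rewrite (clause_neg _ _ _ H). destruct (FSent_neg HGB _ _ _ Hx H) as [k0 [Hk0 Hpsi]].
    apply T4; auto. eapply FSent_mono; eauto. apply succ_elem; auto.
  - rewrite (clause_or _ _ _ _ H). apply T5; auto.
  - rewrite (clause_ex _ _ _ _ H). apply T6; auto.
Qed.

Lemma Most_zero : forall z, empty z -> C_Most z.
Proof.
  intros z Hz. split; [apply nat_empty; auto|].
  destruct (inhC HGB) as [X0].
  destruct (def_class HGB (fun _ => X0) (fun e => False) (def_false _) (fun _ => z)) as [T HT].
  exists T. split; [intros x Hx; apply HT in Hx; destruct Hx|].
  split; [intros x t s a b Hx; exfalso; exact (FSent_emptyk HGB z x Hz Hx)|].
  split; [intros x t s a b Hx; exfalso; exact (FSent_emptyk HGB z x Hz Hx)|].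
  split; [intros x y Hx; exfalso; exact (FSent_emptyk HGB z x Hz Hx)|].
  split; [intros x y y' Hx; exfalso; exact (FSent_emptyk HGB z x Hz Hx)|].
  intros x y y' Hx; exfalso; exact (FSent_emptyk HGB z x Hz Hx).
Qed.

Lemma Most_succ : forall k k', C_Most k -> succ k k' -> C_Most k'.
Proof.
  intros k k' [Hk [T HT]] Hs.
  assert (Hk' : is_nat k') by (eapply nat_succ; eauto).
  split; auto.
  assert (HD : @Definable V C ein cin (fun _ => T) (fun e => FSent (e 1) (e 0) /\ Clause (fun y => cin y ((fun _ => T) 0)) (e 0))).
  { unfold Clause. solve_def. }
  destruct (def_class HGB _ _ HD (fun _ => k')) as [T' HT']. simpl in HT'.
  assert (Hkk' : ein k k') by (apply succ_elem; auto).
  assert (Hagree : forall x, FSent k x -> (cin x T' <-> cin x T)).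
  { intros x Hx. rewrite HT', (clause_T k T x Hk HT Hx). split; [tauto|].
    intro H; split; auto. eapply FSent_mono; eauto. }
  assert (Hdown : forall k0 x, succ k0 k' -> FSent k0 x -> FSent k x).
  { intros k0 x H0 Hx. rewrite (succ_inj HGB _ _ _ H0 Hs) in Hx. exact Hx. }
  exists T'. split; [|split; [|split; [|split; [|split]]]].
  - intros x Hx. apply HT' in Hx. tauto.
  - intros x t s a b Hx Ha Hb Hf. rewrite HT', (clause_eq _ _ _ _ _ _ Hf Ha Hb). tauto.
  - intros x t s a b Hx Ha Hb Hf. rewrite HT', (clause_in _ _ _ _ _ _ Hf Ha Hb). tauto.
  - intros phi psi Hphi Hpsi Hn. rewrite HT', (clause_neg _ _ _ Hn).
    destruct (FSent_neg HGB _ _ _ Hphi Hn) as [k0 [Hk0 Hp]].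
    rewrite (Hagree psi (Hdown _ _ Hk0 Hp)). tauto.
  - intros phi psi1 psi2 Hphi Ho. rewrite HT', (clause_or _ _ _ _ Ho).
    destruct (FSent_or HGB _ _ _ _ Hphi Ho) as [k0 [Hk0 [Hp1 Hp2]]].
    rewrite (Hagree psi1 (Hdown _ _ Hk0 Hp1)), (Hagree psi2 (Hdown _ _ Hk0 Hp2)). tauto.
  - intros phi i psi Hphi He. rewrite HT', (clause_ex _ _ _ _ He).
    split.
    + intros [_ [a [sigma [HS Hsig]]]]. exists a, sigma. split; auto.
      destruct (FSent_Sub1 HGB _ _ _ _ _ _ Hphi He HS) as [k0 [Hk0 Hsg]].
      apply (Hagree sigma (Hdown _ _ Hk0 Hsg)). auto.
    + intros [a [sigma [HS Hsig]]]. split; auto. exists a, sigma. split; auto.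
      destruct (FSent_Sub1 HGB _ _ _ _ _ _ Hphi He HS) as [k0 [Hk0 Hsg]].
      apply (Hagree sigma (Hdown _ _ Hk0 Hsg)). auto.
Qed.

Lemma Most_down : forall k j, C_Most k -> is_nat j -> ein j k -> C_Most j.
Proof.
  intros k j [Hk [T HT]] Hj Hjk. split; auto.
  assert (HD : @Definable V C ein cin (fun _ => T) (fun e => FSent (e 1) (e 0) /\ cin (e 0) ((fun _ => T) 0))).
  { solve_def. }
  destruct (def_class HGB _ _ HD (fun _ => j)) as [T' HT']. simpl in HT'.
  assert (Hup : forall x, FSent j x -> FSent k x) by (intros; eapply FSent_mono; eauto).
  assert (Hagree : forall x, FSent j x -> (cin x T' <-> cin x T)).
  { intros x Hx. rewrite HT'. tauto. }
  assert (Hdown : forall k0 x, succ k0 j -> FSent k0 x -> FSent j x).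
  { intros k0 x H0 Hx. eapply FSent_mono; eauto. apply succ_elem; auto. }
  destruct HT as (T1 & T2 & T3 & T4 & T5 & T6).
  exists T'. split; [|split; [|split; [|split; [|split]]]].
  - intros x Hx. apply HT' in Hx. tauto.
  - intros x t s a b Hx Ha Hb Hf. rewrite (Hagree x Hx). eapply T2; eauto.
  - intros x t s a b Hx Ha Hb Hf. rewrite (Hagree x Hx). eapply T3; eauto.
  - intros phi psi Hphi Hpsi Hn. rewrite (Hagree phi Hphi), (Hagree psi Hpsi). apply T4; auto.
  - intros phi psi1 psi2 Hphi Ho. rewrite (Hagree phi Hphi).
    destruct (FSent_or HGB _ _ _ _ Hphi Ho) as [k0 [Hk0 [Hp1 Hp2]]].
    rewrite (Hagree psi1 (Hdown _ _ Hk0 Hp1)), (Hagree psi2 (Hdown _ _ Hk0 Hp2)). apply T5; auto.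
  - intros phi i psi Hphi He. rewrite (Hagree phi Hphi), (T6 phi i psi (Hup _ Hphi) He).
    split; intros [a [sigma [HS Hsig]]]; exists a, sigma; split; auto;
      destruct (FSent_Sub1 HGB _ _ _ _ _ _ Hphi He HS) as [k0 [Hk0 Hsg]];
      rewrite (Hagree sigma (Hdown _ _ Hk0 Hsg)) in *; exact Hsig.
Qed.

End Main.

Theorem cut_from_base : forall (S C : Type) (ein : S -> S -> Prop) (cin : S -> C -> Prop),
  GB_base S C ein cin -> is_cut_Most S C ein cin.
Proof.
  intros S C ein cin H. split; [|split].
  - exact (Most_zero H).
  - exact (Most_succ H).
  - exact (Most_down H).
Qed.

Theorem lemma3p2 :
  (forall (S C : Type) (ein : S -> S -> Prop) (cin : S -> C -> Prop),
      GB_plus_inf S C ein cin -> is_cut_Most S C ein cin) /\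
  (forall (S C : Type) (ein : S -> S -> Prop) (cin : S -> C -> Prop),
      GB_minus_inf S C ein cin -> is_cut_Most S C ein cin).
Proof.
  split.
  - intros S C ein cin [H _]. exact (cut_from_base S C ein cin H).
  - intros S C ein cin [H _]. exact (cut_from_base S C ein cin H).
Qed.
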